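(* For every word $x$ there exists at most one densely non-increasing sequence $(u_\beta)_{\beta<\alpha}$ of prime words such that $x=\prod_{\beta<\alpha}u_\beta$.
   Context: $A$ is a finite alphabet with a linear order $<_A$. Words are sequences of letters indexed by countable ordinals; $\prod$ is ordered concatenation and $x^\alpha$ the concatenation of $\alpha$ copies of $x$. A suffix of $x$ is $x[\gamma,|x|)$, proper if $0<\gamma<|x|$. Write $x<_{str}x'$ if there are letters $a<_Ab$ and words $y,z,z'$ with $x=yaz$, $x'=ybz'$; $x\le_{lex}x'$ iff $x$ is a prefix of $x'$ or $x<_{str}x'$. A word is primitive if $x=y^\alpha$ implies $\alpha=1$ and $y=x$; $w$ is prime if it is primitive and every proper suffix $z$ satisfies $w\le_{lex}z$. A sequence $(u_\beta)_{\beta<\alpha}$ of words is densely non-increasing if for all $\gamma<\gamma'\le\alpha$, either $u_\beta=u_\gamma$ for all $\gamma\le\beta<\gamma'$, or there exist $\gamma\le\beta<\beta'<\gamma'$ with $u_\beta>_{lex}u_{\beta'}$. *)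

(* Defs.v *)
From mathcomp Require Import all_boot all_order.
Set Implicit Arguments. Unset Strict Implicit. Unset Printing Implicit Defensive.
Import Order.TTheory.
Local Open Scope order_scope.

(* Transfinite words are represented concretely: a word is an index type
   with a strict order and a labelling; the predicates below say that the
   order is a well-order (i.e. the length is an ordinal). Words are compared
   up to label-preserving order isomorphism ([weq]), which is the identity of
   words "indexed by ordinals". *)

Definition well_order (T : Type) (r : T -> T -> Prop) : Prop :=
  (forall a, ~ r a a) /\
  (forall a b c, r a b -> r b c -> r a c) /\
  (forall a b, r a b \/ a = b \/ r b a) /\
  well_founded r.

Record ord := Ord { oc :> Type; olt : oc -> oc -> Prop }.
Definition is_ordinal (J : ord) : Prop := well_order (@olt J).
Definition ord_eq (J K : ord) (f : J -> K) : Prop :=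
  (exists g : K -> J, (forall j, g (f j) = j) /\ (forall k, f (g k) = k)) /\
  (forall a b, olt a b <-> olt (f a) (f b)).
Definition is_one (J : ord) : Prop := exists t : J, forall s : J, s = t.

Section Words.
Context {disp : Order.disp_t} {A : finOrderType disp}.

Record word := Word { idx : Type; ltw : idx -> idx -> Prop; lab : idx -> A }.

Definition is_word (w : word) : Prop := well_order (@ltw w).
Definition countable_word (w : word) : Prop :=
  exists f : idx w -> nat, forall a b, f a = f b -> a = b.

Definition weq (x y : word) : Prop :=
  exists f : idx x -> idx y,
    (exists g : idx y -> idx x, (forall i, g (f i) = i) /\ (forall j, f (g j) = j)) /\
    (forall a b, ltw a b <-> ltw (f a) (f b)) /\
    (forall a, lab (f a) = lab a).

Definition wprod (J : ord) (u : J -> word) : word :=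
  @Word {j : J & idx (u j)}
    (fun p q => olt (projT1 p) (projT1 q) \/
       exists h : projT1 p = projT1 q,
         ltw (eq_rect _ (fun j => idx (u j)) (projT2 p) _ h) (projT2 q))
    (fun p => lab (projT2 p)).

Definition wpow (y : word) (J : ord) : word := wprod (fun _ : J => y).

Definition wcat (x y : word) : word :=
  @Word (idx x + idx y)%type
    (fun p q => match p, q with
                | inl a, inl b => ltw a b
                | inr a, inr b => ltw a b
                | inl _, inr _ => True
                | inr _, inl _ => False end)
    (fun p => match p with inl a => lab a | inr b => lab b end).
Definition wletter (a : A) : word := @Word unit (fun _ _ => False) (fun _ => a).

Definition wsuffix (x : word) (g : idx x) : word :=
  @Word {i : idx x | ~ ltw i g} (fun p q => ltw (proj1_sig p) (proj1_sig q))
    (fun p => lab (proj1_sig p)).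
(* g is a proper position: 0 < g (g < |x| holds as g is a position) *)
Definition proper_pos (x : word) (g : idx x) : Prop := exists d, ltw d g.

Definition str_lt (x x' : word) : Prop :=
  exists (y z z' : word) (a b : A),
    [/\ is_word y, is_word z, is_word z', a < b /\
        weq x (wcat y (wcat (wletter a) z)) &
        weq x' (wcat y (wcat (wletter b) z'))].

Definition wprefix (x x' : word) : Prop :=
  exists z : word, is_word z /\ weq x' (wcat x z).

Definition le_lex (x x' : word) : Prop := wprefix x x' \/ str_lt x x'.
Definition lt_lex (x x' : word) : Prop := le_lex x x' /\ ~ weq x x'.

Definition primitive (x : word) : Prop :=
  forall (y : word) (J : ord), is_word y -> is_ordinal J ->
    weq x (wpow y J) -> is_one J /\ weq y x.

Definition prime_word (w : word) : Prop :=
  primitive w /\ forall g : idx w, proper_pos g -> le_lex w (wsuffix g).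

(* densely non-increasing sequence (u_b)_{b < J}; the upper bound g' ranges
   over J and J itself (encoded as None) *)
Definition below (J : ord) (g' : option J) (b : J) : Prop :=
  match g' with Some g => olt b g | None => True end.

Definition dense_nonincr (J : ord) (u : J -> word) : Prop :=
  forall (g : J) (g' : option J), below g' g ->
    (forall b, ~ olt b g -> below g' b -> weq (u b) (u g)) \/
    (exists b b', [/\ ~ olt b g, olt b b', below g' b' & lt_lex (u b') (u b)]).

Definition seq_eq (J K : ord) (u : J -> word) (v : K -> word) : Prop :=
  exists f : J -> K, ord_eq f /\ forall j, weq (u j) (v (f j)).

End Words.

(* Main.v *)
Require Import Defs.
From mathcomp Require Import all_boot all_order.
From Stdlib Require Import Classical ClassicalEpsilon ProofIrrelevance Eqdep Wellfounded.
Set Implicit Arguments. Unset Strict Implicit.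


Section Gen.
Context {disp : Order.disp_t} {A : finOrderType disp}.
Local Notation word := (@word disp A).

Lemma wo_irr (w : word) : is_word w -> forall x : idx w, ~ ltw x x.
Proof. intros [H _] x; apply H. Qed.
Lemma wo_trans (w : word) : is_word w -> forall x y z : idx w, ltw x y -> ltw y z -> ltw x z.
Proof. intros [_ [H _]]; apply H. Qed.
Lemma wo_tri (w : word) : is_word w -> forall x y : idx w, ltw x y \/ x = y \/ ltw y x.
Proof. intros [_ [_ [H _]]]; apply H. Qed.
Lemma wo_wf (w : word) : is_word w -> well_founded (@ltw _ _ w).
Proof. intros [_ [_ [_ H]]]; apply H. Qed.

Lemma wf_min (T : Type) (R : T -> T -> Prop) : well_founded R ->
  forall Q : T -> Prop, (exists x, Q x) -> exists x, Q x /\ forall y, R y x -> ~ Q y.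
Proof.
  intros Hwf Q [x Hx]. apply NNPP; intros Hn.
  assert (forall z, ~ Q z) as Hall.
  { intros z; induction (Hwf z) as [z _ IH]. intros Hz. apply Hn. exists z; split; auto. }
  exact (Hall x Hx).
Qed.

Definition seg (a b : word) (SA : idx a -> Prop) (SB : idx b -> Prop) (f : idx a -> idx b) : Prop :=
  (forall x, SA x -> SB (f x)) /\
  (forall y, SB y -> exists x, SA x /\ f x = y) /\
  (forall x y, SA x -> SA y -> (ltw x y <-> ltw (f x) (f y))) /\
  (forall x, SA x -> lab (f x) = lab x).

Definition dclosed (b : word) (B C : idx b -> Prop) : Prop :=
  forall y y', B y -> C y' -> ltw y' y -> B y'.

Lemma seg_inj (a b : word) SA SB f : is_word a -> is_word b -> @seg a b SA SB f ->
  forall x y, SA x -> SA y -> f x = f y -> x = y.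
Proof.
  intros Ha Hb [_ [_ [Ho _]]] x y Hx Hy E.
  destruct (wo_tri Ha x y) as [H|[H|H]]; auto.
  - apply (proj1 (Ho _ _ Hx Hy)) in H. rewrite E in H. exfalso; exact (wo_irr Hb H).
  - apply (proj1 (Ho _ _ Hy Hx)) in H. rewrite E in H. exfalso; exact (wo_irr Hb H).
Qed.

Lemma seg_comp (a b c : word) SA SB SC f g : @seg a b SA SB f -> @seg b c SB SC g ->
  seg SA SC (fun x => g (f x)).
Proof.
  intros [F1 [F2 [F3 F4]]] [G1 [G2 [G3 G4]]]. split; [|split; [|split]].
  - intros x Hx; auto.
  - intros z Hz. destruct (G2 z Hz) as [y [Hy E]]. destruct (F2 y Hy) as [x [Hx E']].
    exists x; split; auto. rewrite E'; auto.
  - intros x y Hx Hy. rewrite (F3 x y Hx Hy). apply G3; auto.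
  - intros x Hx. rewrite (G4 _ (F1 _ Hx)). auto.
Qed.

Lemma seg_id (a : word) S : @seg a a S S (fun x => x).
Proof. split; [|split; [|split]]; intros; try tauto. eexists; eauto. Qed.

Lemma seg_ext (a b : word) SA SB SA' SB' f : @seg a b SA SB f ->
  (forall x, SA' x <-> SA x) -> (forall y, SB' y <-> SB y) -> seg SA' SB' f.
Proof.
  intros [F1 [F2 [F3 F4]]] E1 E2. split; [|split; [|split]].
  - intros x Hx. apply E2, F1, E1, Hx.
  - intros y Hy. destruct (F2 y (proj1 (E2 y) Hy)) as [x [Hx E]]. exists x; split; auto. apply E1; auto.
  - intros x y Hx Hy. apply F3; apply E1; auto.
  - intros x Hx. apply F4, E1, Hx.
Qed.

Lemma seg_restr (a b : word) SA SB SA' f : @seg a b SA SB f -> (forall x, SA' x -> SA x) ->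
  seg SA' (fun y => exists x, SA' x /\ f x = y) f.
Proof.
  intros [F1 [F2 [F3 F4]]] Hs. split; [|split; [|split]].
  - intros x Hx. exists x; auto.
  - intros y [x [Hx E]]. exists x; auto.
  - intros x y Hx Hy. apply F3; auto.
  - intros x Hx; auto.
Qed.

Lemma seg_lt (a b : word) SA SB f p : is_word a -> is_word b -> @seg a b SA SB f -> SA p ->
  seg (fun x => SA x /\ ltw x p) (fun y => SB y /\ ltw y (f p)) f.
Proof.
  intros Ha Hb [F1 [F2 [F3 F4]]] Hp. split; [|split; [|split]].
  - intros x [Hx Hl]. split; auto. apply F3; auto.
  - intros y [Hy Hl]. destruct (F2 y Hy) as [x [Hx E]]. exists x; split; auto. split; auto.
    apply (F3 x p Hx Hp). rewrite E; auto.
  - intros x y [Hx _] [Hy _]; auto.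
  - intros x [Hx _]; auto.
Qed.

Lemma seg_inv (a b : word) SA SB f : is_word a -> is_word b -> @seg a b SA SB f -> inhabited (idx a) ->
  exists g, seg SB SA g /\ (forall x, SA x -> g (f x) = x) /\ (forall y, SB y -> f (g y) = y).
Proof.
  intros Ha Hb Hs [d]. pose proof Hs as [F1 [F2 [F3 F4]]].
  assert (forall y, {x | SB y -> SA x /\ f x = y}) as C.
  { intros y. apply constructive_indefinite_description.
    destruct (classic (SB y)) as [H|H].
    - destruct (F2 y H) as [x Hx]. exists x; auto.
    - exists d; tauto. }
  exists (fun y => proj1_sig (C y)).
  assert (Hg : forall y, SB y -> SA (proj1_sig (C y)) /\ f (proj1_sig (C y)) = y).
  { intros y Hy. exact (proj2_sig (C y) Hy). }
  assert (Hgf : forall x, SA x -> proj1_sig (C (f x)) = x).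
  { intros x Hx. destruct (Hg (f x) (F1 x Hx)) as [H1 H2]. eapply seg_inj; eauto. }
  split; [|split].
  - split; [|split; [|split]].
    + intros y Hy; apply Hg; auto.
    + intros x Hx. exists (f x); split; auto.
    + intros y1 y2 H1 H2. destruct (Hg _ H1) as [A1 B1]. destruct (Hg _ H2) as [A2 B2].
      rewrite (F3 _ _ A1 A2) B1 B2. tauto.
    + intros y Hy. destruct (Hg _ Hy) as [A1 B1]. rewrite <- (F4 _ A1). rewrite B1; auto.
  - exact Hgf.
  - intros y Hy; apply Hg; auto.
Qed.

Lemma seg_unique (a b : word) SA B1 B2 C f g : is_word a -> is_word b ->
  @seg a b SA B1 f -> @seg a b SA B2 g ->
  (forall y, B1 y -> C y) -> (forall y, B2 y -> C y) -> dclosed B1 C -> dclosed B2 C ->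
  forall x, SA x -> f x = g x.
Proof.
  intros Ha Hb [F1 [F2 [F3 F4]]] [G1 [G2 [G3 G4]]] S1 S2 D1 D2 x.
  induction (wo_wf Ha x) as [x _ IH]. intros Hx.
  destruct (wo_tri Hb (f x) (g x)) as [H|[H|H]]; auto; exfalso.
  - assert (B2 (f x)) as Hb2 by (eapply D2; eauto).
    destruct (G2 _ Hb2) as [y [Hy E]].
    assert (ltw y x) as Hyx. { apply (G3 y x Hy Hx). rewrite E; auto. }
    pose proof (IH y Hyx Hy) as E2. rewrite <- E2 in E.
    apply (F3 y x Hy Hx) in Hyx. rewrite E in Hyx. exact (wo_irr Hb Hyx).
  - assert (B1 (g x)) as Hb1 by (eapply D1; eauto).
    destruct (F2 _ Hb1) as [y [Hy E]].
    assert (ltw y x) as Hyx. { apply (F3 y x Hy Hx). rewrite E; auto. }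
    pose proof (IH y Hyx Hy) as E2. rewrite E2 in E.
    apply (G3 y x Hy Hx) in Hyx. rewrite E in Hyx. exact (wo_irr Hb Hyx).
Qed.

Lemma seg_unique_img (a b : word) SA B1 B2 C f g : is_word a -> is_word b ->
  @seg a b SA B1 f -> @seg a b SA B2 g ->
  (forall y, B1 y -> C y) -> (forall y, B2 y -> C y) -> dclosed B1 C -> dclosed B2 C ->
  forall y, B1 y -> B2 y.
Proof.
  intros Ha Hb Hf Hg S1 S2 D1 D2 y Hy.
  destruct Hf as [F1 [F2 F3]]. destruct (F2 y Hy) as [x [Hx E]].
  rewrite <- E. rewrite (@seg_unique a b SA B1 B2 C f g); auto.
  - apply (proj1 Hg); auto.
  - split; auto.
Qed.

Lemma dclosed_lt (b : word) (C : idx b -> Prop) q : is_word b ->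
  dclosed (fun y => C y /\ ltw y q) C.
Proof. intros Hb y y' [Hy Hl] Hy' Hl'. split; auto. eapply wo_trans; eauto. Qed.

Lemma dclosed_refl (b : word) (C : idx b -> Prop) : dclosed C C.
Proof. intros y y' _ H _; auto. Qed.

Lemma seg_pts (a b : word) SA (C : idx b -> Prop) q1 q2 f g : is_word a -> is_word b ->
  @seg a b SA (fun y => C y /\ ltw y q1) f -> @seg a b SA (fun y => C y /\ ltw y q2) g ->
  C q1 -> C q2 -> q1 = q2.
Proof.
  intros Ha Hb Hf Hg C1 C2.
  assert (I12 := @seg_unique_img a b SA _ _ C f g Ha Hb Hf Hg).
  assert (I21 := @seg_unique_img a b SA _ _ C g f Ha Hb Hg Hf).
  destruct (wo_tri Hb q1 q2) as [H|[H|H]]; auto; exfalso.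
  - destruct (I21 (fun y H => proj1 H) (fun y H => proj1 H) (dclosed_lt (C:=C) Hb) (dclosed_lt (C:=C) Hb) q1)
      as [_ H']; auto. exact (wo_irr Hb H').
  - destruct (I12 (fun y H => proj1 H) (fun y H => proj1 H) (dclosed_lt (C:=C) Hb) (dclosed_lt (C:=C) Hb) q2)
      as [_ H']; auto. exact (wo_irr Hb H').
Qed.

Lemma seg_full_pt (a b : word) SA (C : idx b -> Prop) q f g : is_word a -> is_word b ->
  @seg a b SA C f -> @seg a b SA (fun y => C y /\ ltw y q) g -> C q -> False.
Proof.
  intros Ha Hb Hf Hg Cq.
  destruct (@seg_unique_img a b SA _ _ C f g Ha Hb Hf Hg (fun y H => H) (fun y H => proj1 H)
    (dclosed_refl (C:=C)) (dclosed_lt (C:=C) Hb) q Cq) as [_ H]. exact (wo_irr Hb H).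
Qed.


Lemma ltA_irr (x : A) : ~ (x < x)%O.
Proof. by rewrite Order.POrderTheory.ltxx. Qed.
Lemma ltA_trans (x y z : A) : (x < y)%O -> (y < z)%O -> (x < z)%O.
Proof. apply Order.POrderTheory.lt_trans. Qed.

Definition img (a b : word) (f : idx a -> idx b) (S : idx a -> Prop) : idx b -> Prop :=
  fun y => exists x, S x /\ f x = y.

Definition Pre (a b : word) (SA : idx a -> Prop) (SB : idx b -> Prop) : Prop :=
  exists f B', @seg a b SA B' f /\ (forall y, B' y -> SB y) /\ dclosed B' SB.
Definition Str (a b : word) (SA : idx a -> Prop) (SB : idx b -> Prop) : Prop :=
  exists p q f, SA p /\ SB q /\
    @seg a b (fun x => SA x /\ ltw x p) (fun y => SB y /\ ltw y q) f /\ (lab p < lab q)%O.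
Definition PPre (a b : word) (SA : idx a -> Prop) (SB : idx b -> Prop) : Prop :=
  exists q f, SB q /\ @seg a b SA (fun y => SB y /\ ltw y q) f.
Definition Le (a b : word) (SA : idx a -> Prop) (SB : idx b -> Prop) : Prop :=
  Pre SA SB \/ Str SA SB.

Lemma dclosed_trans (b : word) (B1 B2 B3 : idx b -> Prop) :
  dclosed B1 B2 -> dclosed B2 B3 -> (forall y, B1 y -> B2 y) -> dclosed B1 B3.
Proof. intros D1 D2 S y y' H1 H3 Hl. eapply D1; eauto. Qed.

Lemma dclosed_img (a b : word) SA SB F f : is_word a -> @seg a b SA SB f ->
  (forall x, F x -> SA x) -> dclosed F SA -> dclosed (img f F) SB.
Proof.
  intros Ha [F1 [F2 [F3 F4]]] S D y y' [x [Hx E]] Hy' Hl.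
  destruct (F2 y' Hy') as [x' [Hx' E']]. exists x'; split; auto.
  apply (D x x'); auto. apply (F3 x' x Hx' (S x Hx)). rewrite E E'; auto.
Qed.

Lemma self_emb (X : word) (W B : idx X -> Prop) g : is_word X ->
  seg W B g -> (forall y, B y -> W y) -> dclosed B W -> forall y, W y -> B y.
Proof.
  intros HX Hg S D. eapply (@seg_unique_img X X W W B W (fun x => x) g HX HX (seg_id W) Hg); auto.
  apply dclosed_refl.
Qed.

Lemma lt_and_ext (X : word) (W B : idx X -> Prop) q : is_word X ->
  (forall y, B y -> W y) -> dclosed B W -> B q ->
  forall y, (B y /\ ltw y q) <-> (W y /\ ltw y q).
Proof. intros HX S D Hq y; split; intros [H1 H2]; split; eauto. Qed.

Lemma lt2_ext (X : word) (S : idx X -> Prop) q r : is_word X -> ltw q r ->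
  forall y, ((S y /\ ltw y r) /\ ltw y q) <-> (S y /\ ltw y q).
Proof. intros HX Hqr y; split; [tauto|]. intros [H1 H2]; repeat split; auto. eapply wo_trans; eauto. Qed.

Section Single.
Variable X : word.
Hypothesis HX : is_word X.

Lemma Anti1 (W Z B : idx X -> Prop) : Le W Z -> Pre Z B -> (forall y, B y -> W y) -> dclosed B W ->
  (exists r, W r /\ ~ B r) -> False.
Proof.
  intros HL [h [B' [Hh [SB' DB']]]] SB DB [r [Wr Br]].
  destruct HL as [[f [F' [Hf [SF DF]]]] | [p [p' [g [Wp [Zp [Hg Hlab]]]]]]].
  - assert (Hc := seg_comp Hf (seg_restr Hh SF)).
    assert (D1 : dclosed (img h F') W).
    { apply (dclosed_trans (B2 := B')).
      - apply (dclosed_img HX Hh SF DF).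
      - exact (dclosed_trans DB' DB SB').
      - intros y [x [Hx E]]. rewrite <- E. apply (proj1 Hh). auto. }
    assert (S1 : forall y, img h F' y -> W y).
    { intros y [x [Hx E]]. apply SB, SB'. rewrite <- E. apply (proj1 Hh). auto. }
    pose proof (self_emb HX Hc S1 D1 Wr) as [x [Hx E]].
    apply Br, SB'. rewrite <- E. apply (proj1 Hh); auto.
  - assert (Zp' := Zp). 
    assert (Hc := seg_comp Hg (seg_lt HX HX Hh Zp)).
    assert (Bh : B' (h p')) by (apply (proj1 Hh); auto).
    assert (Hc' : seg (fun x => W x /\ ltw x p) (fun y => W y /\ ltw y (h p')) (fun x => h (g x))).
    { eapply seg_ext; [exact Hc | tauto | ].
      intros y; split; intros [H1 H2]; split; auto.
      all: first [ apply SB, SB'; auto | apply (DB' (h p') y); auto; apply (DB (h p') y); auto ]. }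
    assert (E := seg_pts HX HX (seg_id (fun x => W x /\ ltw x p)) Hc' Wp (SB _ (SB' _ Bh))).
    assert (L : lab p = lab p') by (rewrite E; apply (proj2 (proj2 (proj2 Hh))); auto).
    rewrite L in Hlab. exact (ltA_irr Hlab).
Qed.

Lemma Anti2 (W Z B : idx X -> Prop) : Le W Z -> Str Z B -> (forall y, B y -> W y) -> dclosed B W -> False.
Proof.
  intros HL [p [p0 [g [Zp [Bp0 [Hg0 Hlab]]]]]] SB DB.
  assert (Hg : seg (fun x => Z x /\ ltw x p) (fun y => W y /\ ltw y p0) g).
  { eapply seg_ext; [exact Hg0 | tauto | ]. intros y. symmetry. apply lt_and_ext; auto. }
  assert (Wp0 : W p0) by auto.
  destruct HL as [[f [F' [Hf [SF DF]]]] | [p1 [p1' [g1 [Wp1 [Zp1 [Hg1 Hlab1]]]]]]].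
  - destruct (classic (F' p)) as [Fp | Fp].
    + destruct (proj1 (proj2 Hf) p Fp) as [x [Wx E]].
      assert (Hf1 := seg_lt HX HX Hf Wx). rewrite E in Hf1.
      assert (Hf2 : seg (fun y => W y /\ ltw y x) (fun y => Z y /\ ltw y p) f).
      { eapply seg_ext; [exact Hf1 | tauto |]. intros y. symmetry. apply lt_and_ext; auto. }
      assert (Hc := seg_comp Hf2 Hg).
      assert (E2 := seg_pts HX HX (seg_id (fun y => W y /\ ltw y x)) Hc Wx Wp0).
      assert (L : lab p = lab p0). { rewrite -E (proj2 (proj2 (proj2 Hf)) x Wx) E2. reflexivity. }
      rewrite L in Hlab. exact (ltA_irr Hlab).
    + assert (SF2 : forall y, F' y -> Z y /\ ltw y p).
      { intros y Fy. split; auto. destruct (wo_tri HX y p) as [H|[H|H]]; auto.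
        - subst; contradiction.
        - exfalso; apply Fp. apply (DF y p); auto. }
      assert (Hc := seg_comp Hf (seg_restr Hg SF2)).
      assert (S1 : forall y, img g F' y -> W y /\ ltw y p0).
      { intros y [x [Hx E]]. rewrite <- E. apply (proj1 Hg). auto. }
      assert (D1 : dclosed (img g F') W).
      { apply (dclosed_trans (B2 := fun y => W y /\ ltw y p0)); auto.
        - apply (dclosed_img HX Hg SF2). intros y y' Fy [Zy' _] Hl. apply (DF y y'); auto.
        - apply dclosed_lt; auto. }
      destruct (self_emb HX Hc (fun y H => proj1 (S1 y H)) D1 Wp0) as [x [Fx E]].
      destruct (S1 p0) as [_ H]. { exists x; auto. } exact (wo_irr HX H).
  - destruct (wo_tri HX p1' p) as [H|[H|H]].
    + assert (Zq : Z p1' /\ ltw p1' p) by auto.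
      assert (Hgl := seg_lt HX HX Hg Zq).
      assert (Wg : W (g p1') /\ ltw (g p1') p0) by (apply (proj1 Hg); auto).
      assert (Hgl' : seg (fun y => Z y /\ ltw y p1') (fun y => W y /\ ltw y (g p1')) g).
      { eapply seg_ext; [exact Hgl | |]; intros y; symmetry; apply lt2_ext; tauto. }
      assert (Hc := seg_comp Hg1 Hgl').
      assert (E := seg_pts HX HX (seg_id (fun y => W y /\ ltw y p1)) Hc Wp1 (proj1 Wg)).
      assert (L : lab p1 = lab p1') by (rewrite E; apply (proj2 (proj2 (proj2 Hg))); auto).
      rewrite L in Hlab1. exact (ltA_irr Hlab1).
    + subst p1'. assert (Hc := seg_comp Hg1 Hg).
      assert (E := seg_pts HX HX (seg_id (fun y => W y /\ ltw y p1)) Hc Wp1 Wp0).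
      subst p1. exact (ltA_irr (ltA_trans Hlab1 Hlab)).
    + destruct (proj1 (proj2 Hg1) p (conj Zp H)) as [x [[Wx Hx] E]].
      assert (Hgl := seg_lt HX HX Hg1 (conj Wx Hx)). rewrite E in Hgl.
      assert (Hgl' : seg (fun y => W y /\ ltw y x) (fun y => Z y /\ ltw y p) g1).
      { eapply seg_ext; [exact Hgl | |]; intros y; symmetry; apply lt2_ext; tauto. }
      assert (Hc := seg_comp Hgl' Hg).
      assert (E2 := seg_pts HX HX (seg_id (fun y => W y /\ ltw y x)) Hc Wx Wp0).
      assert (L : lab p = lab p0).
      { rewrite -E (proj2 (proj2 (proj2 Hg1)) x (conj Wx Hx)) E2. reflexivity. }
      rewrite L in Hlab. exact (ltA_irr Hlab).
Qed.

Lemma Str_mono_l (Z C Z' : idx X -> Prop) : Str Z C -> (forall y, Z y -> Z' y) -> dclosed Z Z' -> Str Z' C.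
Proof.
  intros [p [q [g [Zp [Cq [Hg Hl]]]]]] S D. exists p, q, g. do 2 (split; [auto|]). split; [|auto].
  eapply seg_ext; [exact Hg | | tauto]. intros y; symmetry; apply lt_and_ext; auto.
Qed.

Lemma Str_mono_r (Z B1 B2 : idx X -> Prop) : Str Z B1 -> (forall y, B1 y -> B2 y) -> dclosed B1 B2 -> Str Z B2.
Proof.
  intros [p [q [g [Zp [Cq [Hg Hl]]]]]] S D. exists p, q, g. do 2 (split; [auto|]). split; [|auto].
  eapply seg_ext; [exact Hg | tauto | ]. intros y; symmetry; apply lt_and_ext; auto.
Qed.

Lemma Pre_seg (Z B : idx X -> Prop) f : seg Z B f -> Pre Z B.
Proof. intros H. exists f, B. split; [exact H|split; [auto|apply dclosed_refl]]. Qed.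

Lemma Pre_sub (Z B : idx X -> Prop) : (forall y, Z y -> B y) -> dclosed Z B -> Pre Z B.
Proof. intros S D. exists (fun x => x), Z. split; [apply seg_id|split; auto]. Qed.

Lemma Pre_mono (Z B1 B2 : idx X -> Prop) : Pre Z B1 -> (forall y, B1 y -> B2 y) -> dclosed B1 B2 -> Pre Z B2.
Proof.
  intros [f [B' [Hf [S D]]]] S12 D12. exists f, B'. split; [exact Hf|split; auto].
  eapply dclosed_trans; eauto.
Qed.

Lemma Pre_trans (Z B C : idx X -> Prop) : Pre Z B -> Pre B C -> Pre Z C.
Proof.
  intros [f [F' [Hf [SF DF]]]] [h [H' [Hh [SH DH]]]].
  exists (fun x => h (f x)), (img h F'). split; [|split].
  - exact (seg_comp Hf (seg_restr Hh SF)).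
  - intros y [x [Hx E]]. apply SH. rewrite <- E. apply (proj1 Hh); auto.
  - apply (dclosed_trans (B2 := H')); auto.
    + apply (dclosed_img HX Hh SF DF).
    + intros y [x [Hx E]]. rewrite <- E. apply (proj1 Hh); auto.
Qed.

Lemma Str_pre_r (Z B C : idx X -> Prop) : Str Z B -> Pre B C -> Str Z C.
Proof.
  intros [p [q [g [Zp [Bq [Hg Hl]]]]]] [h [H' [Hh [SH DH]]]].
  assert (Hq : H' (h q)) by (apply (proj1 Hh); auto).
  exists p, (h q), (fun x => h (g x)). do 2 (split; [auto|]). split.
  - eapply seg_ext; [exact (seg_comp Hg (seg_lt HX HX Hh Bq)) | tauto |].
    intros y; symmetry; apply lt_and_ext; auto.
  - rewrite (proj2 (proj2 (proj2 Hh)) q Bq). exact Hl.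
Qed.

Lemma Pre_str (Z B C : idx X -> Prop) : Pre Z B -> Str B C -> Le Z C.
Proof.
  intros [f [F' [Hf [SF DF]]]] [p [q [g [Bp [Cq [Hg Hl]]]]]].
  destruct (classic (F' p)) as [Fp|Fp].
  - right. destruct (proj1 (proj2 Hf) p Fp) as [x [Zx E]].
    assert (Hf1 := seg_lt HX HX Hf Zx). rewrite E in Hf1.
    assert (Hf2 : seg (fun y => Z y /\ ltw y x) (fun y => B y /\ ltw y p) f).
    { eapply seg_ext; [exact Hf1 | tauto |]. intros y. symmetry. apply lt_and_ext; auto. }
    exists x, q, (fun y => g (f y)). do 2 (split; [auto|]). split.
    + exact (seg_comp Hf2 Hg).
    + rewrite -(proj2 (proj2 (proj2 Hf)) x Zx) E. exact Hl.
  - left. assert (SF2 : forall y, F' y -> B y /\ ltw y p).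
    { intros y Fy. split; auto. destruct (wo_tri HX y p) as [H|[H|H]]; auto.
      - subst; contradiction.
      - exfalso; apply Fp. apply (DF y p); auto. }
    exists (fun x => g (f x)), (img g F'). split; [|split].
    + exact (seg_comp Hf (seg_restr Hg SF2)).
    + intros y [x [Hx E]]. rewrite <- E. apply (proj1 Hg); auto.
    + apply (dclosed_trans (B2 := fun y => C y /\ ltw y q)).
      * apply (dclosed_img HX Hg SF2). intros y y' Fy [Zy' _] Hl'. apply (DF y y'); auto.
      * apply dclosed_lt; auto.
      * intros y [x [Hx E]]. rewrite <- E. apply (proj1 Hg); auto.
Qed.

Lemma Pre_transfer (a b : word) SA SB (SA' SB' : idx X -> Prop) fa fb : is_word a -> is_word b ->
  @Pre a b SA SB -> seg SA SA' fa -> seg SB SB' fb -> Pre SA' SB'.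
Proof.
  intros Ha Hb [f [B0 [Hf [S0 D0]]]] Hfa Hfb.
  destruct (classic (inhabited (idx a))) as [Hi|Hi].
  - destruct (seg_inv Ha HX Hfa Hi) as [ga [Hga _]].
    exists (fun x => fb (f (ga x))), (img fb B0). split; [|split].
    + exact (seg_comp (seg_comp Hga Hf) (seg_restr Hfb S0)).
    + intros y [x [Hx E]]. rewrite <- E. apply (proj1 Hfb); auto.
    + apply (dclosed_img Hb Hfb S0 D0).
  - assert (E1 : forall x, SA' x -> False).
    { intros x Hx. destruct (proj1 (proj2 Hfa) x Hx) as [z _]. apply Hi; constructor; exact z. }
    exists (fun x => x), (fun _ => False). split; [|split].
    + split; [|split; [|split]]; intros; exfalso; try tauto; eapply E1; eassumption.
    + intros y [].
    + intros y y' [].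
Qed.

Lemma Str_transfer (a b : word) SA SB (SA' SB' : idx X -> Prop) fa fb : is_word a -> is_word b ->
  @Str a b SA SB -> seg SA SA' fa -> seg SB SB' fb -> Str SA' SB'.
Proof.
  intros Ha Hb [p [q [g [Ap [Bq [Hg Hl]]]]]] Hfa Hfb.
  destruct (seg_inv Ha HX Hfa (inhabits p)) as [ga [Hga [Hgf _]]].
  assert (Hgl := seg_lt HX Ha Hga (proj1 Hfa p Ap)). rewrite (Hgf p Ap) in Hgl.
  exists (fa p), (fb q), (fun x => fb (g (ga x))). split; [|split; [|split]].
  - apply (proj1 Hfa); auto.
  - apply (proj1 Hfb); auto.
  - exact (seg_comp (seg_comp Hgl Hg) (seg_lt Hb HX Hfb Bq)).
  - rewrite (proj2 (proj2 (proj2 Hfa)) p Ap) (proj2 (proj2 (proj2 Hfb)) q Bq). exact Hl.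
Qed.

Lemma PPre_transfer (a b : word) SA SB (SA' SB' : idx X -> Prop) fa fb : is_word a -> is_word b ->
  @PPre a b SA SB -> seg SA SA' fa -> seg SB SB' fb -> PPre SA' SB'.
Proof.
  intros Ha Hb [q [f [Bq Hf]]] Hfa Hfb.
  exists (fb q). destruct (classic (inhabited (idx a))) as [Hi|Hi].
  - destruct (seg_inv Ha HX Hfa Hi) as [ga [Hga _]].
    exists (fun x => fb (f (ga x))). split; [apply (proj1 Hfb); auto|].
    exact (seg_comp (seg_comp Hga Hf) (seg_lt Hb HX Hfb Bq)).
  - exists (fun x => x). split; [apply (proj1 Hfb); auto|].
    assert (E1 : forall x, SA' x -> False).
    { intros x Hx. destruct (proj1 (proj2 Hfa) x Hx) as [z _]. apply Hi; constructor; exact z. }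
    assert (E2 : forall y, SB' y /\ ltw y (fb q) -> False).
    { intros y [Hy Hl]. destruct (proj1 (proj2 Hfb) y Hy) as [z [Bz E]].
      rewrite <- E in Hl. apply (proj2 (proj1 (proj2 (proj2 Hfb)) z q Bz Bq)) in Hl.
      destruct (proj1 (proj2 Hf) z (conj Bz Hl)) as [w _]. apply Hi; constructor; exact w. }
    split; [|split; [|split]]; intros; exfalso; try tauto;
      first [ eapply E1; eassumption | eapply E2; eassumption ].
Qed.

End Single.

Definition TT (a : word) : idx a -> Prop := fun _ => True.
Arguments TT {a}.

Lemma weq_seg (a b : word) : weq a b -> exists f, @seg a b TT TT f.
Proof.
  intros [f [[g [Hgf Hfg]] [Ho Hl]]]. exists f. split; [|split; [|split]]; unfold TT; auto.
  intros y _. exists (g y). auto.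
Qed.

Lemma seg_weq (a b : word) f : is_word a -> is_word b -> @seg a b TT TT f -> weq a b.
Proof.
  intros Ha Hb Hs. pose proof Hs as [F1 [F2 [F3 F4]]]. unfold TT in *.
  assert (forall y, {x | f x = y}) as C.
  { intros y. apply constructive_indefinite_description. destruct (F2 y I) as [x [_ E]]. eauto. }
  exists f. split; [|split].
  - exists (fun y => proj1_sig (C y)). split.
    + intros x. apply (seg_inj Ha Hb Hs); unfold TT; auto. exact (proj2_sig (C (f x))).
    + intros y. exact (proj2_sig (C y)).
  - intros x y. apply F3; auto.
  - intros x. apply F4; auto.
Qed.

Lemma weq_refl (a : word) : weq a a.
Proof. exists (fun x => x). split; [|split]; [exists (fun x => x)|..]; tauto. Qed.

Lemma weq_sym (a b : word) : weq a b -> weq b a.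
Proof.
  intros [f [[g [Hgf Hfg]] [Ho Hl]]]. exists g. split; [|split].
  - exists f; auto.
  - intros x y. rewrite (Ho (g x) (g y)) !Hfg. tauto.
  - intros y. rewrite <- (Hl (g y)), Hfg. auto.
Qed.

Lemma weq_trans (a b c : word) : weq a b -> weq b c -> weq a c.
Proof.
  intros [f [[g [Hgf Hfg]] [Ho Hl]]] [f' [[g' [Hgf' Hfg']] [Ho' Hl']]].
  exists (fun x => f' (f x)). split; [|split].
  - exists (fun z => g (g' z)). split; intros; [rewrite Hgf' Hgf | rewrite Hfg Hfg']; auto.
  - intros x y. rewrite Ho Ho'. tauto.
  - intros x. rewrite Hl' Hl. auto.
Qed.

Lemma is_word_weq (a b : word) : weq a b -> is_word a -> is_word b.
Proof.
  intros [f [[g [Hgf Hfg]] [Ho Hl]]] [Hi [Ht [Htr Hwf]]].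
  assert (Ho' : forall y y', ltw y y' <-> ltw (g y) (g y')).
  { intros y y'. rewrite (Ho (g y) (g y')) !Hfg. tauto. }
  split; [|split; [|split]].
  - intros y H. apply Ho' in H. exact (Hi _ H).
  - intros y1 y2 y3 H1 H2. apply Ho' in H1; apply Ho' in H2. apply Ho'. eauto.
  - intros y y'. destruct (Htr (g y) (g y')) as [H|[H|H]].
    + left; apply Ho'; auto.
    + right; left. rewrite <- (Hfg y), <- (Hfg y'), H. auto.
    + right; right; apply Ho'; auto.
  - apply (wf_incl _ _ (fun y y' => ltw (g y) (g y'))).
    + intros y y' H; apply Ho'; auto.
    + apply wf_inverse_image. exact Hwf.
Qed.

Lemma lt_lex_weq_r (a b c : word) : lt_lex a b -> weq b c -> lt_lex a c.
Proof.
  intros [[[z [Hz E]] | [y [z [z' [a0 [b0 [Hy Hz Hz' [Hab Ea] Eb]]]]]]] Hn] Ebc.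
  - split.
    + left. exists z. split; auto. eapply weq_trans; [apply weq_sym; exact Ebc | exact E].
    + intros Hac. apply Hn. eapply weq_trans; [exact Hac | apply weq_sym; exact Ebc].
  - split.
    + right. exists y, z, z', a0, b0. split; auto. eapply weq_trans; [apply weq_sym; exact Ebc | exact Eb].
    + intros Hac. apply Hn. eapply weq_trans; [exact Hac | apply weq_sym; exact Ebc].
Qed.

Lemma CVpre (a b : word) : wprefix a b -> @Pre a b TT TT.
Proof.
  intros [z [Hz [F [[G [GF FG]] [Ho Hl]]]]].
  exists (fun x => G (inl x)), (fun y => exists x, F y = inl x). split; [|split].
  - split; [|split; [|split]].
    + intros x _. exists x. rewrite FG; auto.
    + intros y [x E]. exists x. split; [exact I|]. rewrite <- E, GF. auto.
    + intros x x' _ _. rewrite (Ho (G (inl x)) (G (inl x'))) !FG. simpl. tauto.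
    + intros x _. rewrite <- (Hl (G (inl x))), FG. auto.
  - intros; exact I.
  - intros y y' [x E] _ H. apply Ho in H. rewrite E in H.
    destruct (F y') as [x'|z'] eqn:E'.
    + exists x'; auto.
    + simpl in H. destruct H.
Qed.

Lemma CVstr (a b : word) : str_lt a b -> @Str a b TT TT.
Proof.
  intros [y [z [z' [a0 [b0 [Hy Hz Hz' [Hab [Fa [[Ga [GFa FGa]] [Hoa Hla]]]]
     [Fb [[Gb [GFb FGb]] [Hob Hlb]]]]]]]]].
  set (pa := Ga (inr (inl tt))). set (pb := Gb (inr (inl tt))).
  assert (La : forall x, ltw x pa <-> exists y0, Fa x = inl y0).
  { intros x. unfold pa. rewrite (Hoa x) FGa. destruct (Fa x) as [y0|[[]|z0]]; simpl.
    - split; eauto.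
    - split; [intros []| intros [? E]; discriminate].
    - split; [intros []| intros [? E]; discriminate]. }
  assert (Lb : forall x, ltw x pb <-> exists y0, Fb x = inl y0).
  { intros x. unfold pb. rewrite (Hob x) FGb. destruct (Fb x) as [y0|[[]|z0]]; simpl.
    - split; eauto.
    - split; [intros []| intros [? E]; discriminate].
    - split; [intros []| intros [? E]; discriminate]. }
  exists pa, pb, (fun x => match Fa x with inl y0 => Gb (inl y0) | inr _ => pb end).
  split; [exact I|split; [exact I|split]].
  - split; [|split; [|split]].
    + intros x [_ Hx]. apply La in Hx. destruct Hx as [y0 E]. rewrite E. split; [exact I|].
      apply Lb. exists y0. rewrite FGb; auto.
    + intros y' [_ Hy']. apply Lb in Hy'. destruct Hy' as [y0 E].
      exists (Ga (inl y0)). split. { split; [exact I|]. apply La. exists y0. rewrite FGa; auto. }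
      rewrite FGa. rewrite <- E, GFb. auto.
    + intros x x' [_ Hx] [_ Hx']. apply La in Hx; apply La in Hx'.
      destruct Hx as [y0 E]; destruct Hx' as [y0' E']. rewrite E E'.
      rewrite (Hoa x x') (Hob (Gb (inl y0)) (Gb (inl y0'))) E E' !FGb. simpl. tauto.
    + intros x [_ Hx]. apply La in Hx. destruct Hx as [y0 E]. rewrite E.
      rewrite <- (Hlb (Gb (inl y0))), FGb, <- (Hla x), E. auto.
  - unfold pa, pb. rewrite <- (Hla (Ga _)), <- (Hlb (Gb _)), FGa, FGb. simpl. exact Hab.
Qed.

Lemma CVppre (a b : word) : is_word a -> is_word b -> wprefix a b -> ~ weq a b -> @PPre a b TT TT.
Proof.
  intros Ha Hb [z [Hz [F [[G [GF FG]] [Ho Hl]]]]] Hn.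
  destruct (classic (inhabited (idx z))) as [[z0]|Hi].
  - destruct (@wf_min _ _ (wo_wf Hz) (fun z1 => True) (ex_intro _ z0 I)) as [zm [_ Hm]].
    exists (G (inr zm)), (fun x => G (inl x)). split; [exact I|].
    split; [|split; [|split]].
    + intros x _. split; [exact I|]. apply Ho. rewrite !FG. simpl. exact I.
    + intros y [_ Hy]. apply Ho in Hy. rewrite FG in Hy. destruct (F y) as [x|z1] eqn:E.
      * exists x. split; [exact I|]. rewrite <- E, GF. auto.
      * simpl in Hy. exfalso. apply (Hm z1 Hy I).
    + intros x x' _ _. rewrite (Ho (G (inl x)) (G (inl x'))) !FG. simpl. tauto.
    + intros x _. rewrite <- (Hl (G (inl x))), FG. auto.
  - exfalso. apply Hn. apply (@seg_weq a b (fun x => G (inl x)) Ha Hb).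
    split; [|split; [|split]]; unfold TT.
    + auto.
    + intros y _. destruct (F y) as [x|z1] eqn:E.
      * exists x. split; auto. rewrite <- E, GF. auto.
      * exfalso; apply Hi; constructor; exact z1.
    + intros x x' _ _. rewrite (Ho (G (inl x)) (G (inl x'))) !FG. simpl. tauto.
    + intros x _. rewrite <- (Hl (G (inl x))), FG. auto.
Qed.

Lemma CVle (a b : word) : le_lex a b -> @Le a b TT TT.
Proof. intros [H|H]; [left; apply CVpre | right; apply CVstr]; auto. Qed.

Lemma CVlt (a b : word) : is_word a -> is_word b -> lt_lex a b -> @PPre a b TT TT \/ @Str a b TT TT.
Proof. intros Ha Hb [[H|H] Hn]; [left; apply CVppre | right; apply CVstr]; auto. Qed.

End Gen.
Arguments TT {disp A a} _.


Section Pre0.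
Context {disp : Order.disp_t} {A : finOrderType disp}.
Local Notation word := (@word disp A).
Lemma seg_weq' (a b : word) f : @seg _ _ a b TT TT f -> (forall x y, f x = f y -> x = y) -> weq a b.
Proof.
  intros Hs Inj. pose proof Hs as [F1 [F2 [F3 F4]]]. unfold TT in *.
  assert (forall y, {x | f x = y}) as C.
  { intros y. apply constructive_indefinite_description. destruct (F2 y I) as [x [_ E]]. eauto. }
  exists f. split; [|split].
  - exists (fun y => proj1_sig (C y)). split.
    + intros x. apply Inj. exact (proj2_sig (C (f x))).
    + intros y. exact (proj2_sig (C y)).
  - intros x y. apply F3; auto.
  - intros x. apply F4; auto.
Qed.

Definition subord (J : ord) (G : J -> Prop) : ord :=
  @Ord {j : J | G j} (fun a b => olt (proj1_sig a) (proj1_sig b)).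

Lemma subord_ok (J : ord) (G : J -> Prop) : is_ordinal J -> is_ordinal (subord G).
Proof.
  intros [Hirr [Htr [Htri Hwf]]]. split; [|split; [|split]].
  - intros [j Hj]; simpl. apply Hirr.
  - intros [i Hi] [j Hj] [k Hk]; simpl. apply Htr.
  - intros [i Hi] [j Hj]; simpl. destruct (Htri i j) as [H|[H|H]]; auto.
    right; left. subst. f_equal. apply proof_irrelevance.
  - apply (wf_inverse_image _ _ (@olt J) (fun a : {j : J | G j} => proj1_sig a)). exact Hwf.
Qed.

Lemma gwp_lt_same (J : ord) (u : J -> word) (Hirr : forall j : J, ~ olt j j) (j : J) (a b : idx (u j)) :
  ltw (w:=wprod u) (existT _ j a) (existT _ j b) <-> ltw a b.
Proof.
  simpl. split.
  - intros [H|[h H]]. { exfalso; exact (Hirr _ H). }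
    rewrite (Eqdep.EqdepTheory.UIP_refl _ _ h) in H. exact H.
  - intros H. right. exists (erefl j). exact H.
Qed.

Lemma gwp_lt_diff (J : ord) (u : J -> word) (p q : idx (wprod u)) :
  projT1 p <> projT1 q -> (ltw p q <-> olt (projT1 p) (projT1 q)).
Proof.
  intros Hn. simpl. split; [intros [H|[h _]]|intros H; left]; auto. contradiction.
Qed.

Definition belowo (W : word) (o : option (idx W)) (p : idx W) : Prop :=
  match o with Some q => ltw p q | None => True end.
Definition ltopt (W : word) (o o' : option (idx W)) : Prop :=
  match o, o' with Some a, Some b => ltw a b | Some _, None => True | None, _ => False end.

Lemma ltopt_wf (W : word) : is_word W -> well_founded (@ltopt W).
Proof.
  intros HW.
  assert (HS : forall a, Acc (@ltopt W) (Some a)).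
  { intros a. induction (wo_wf HW a) as [a _ IH]. constructor. intros [b|] H; [apply IH; exact H| destruct H]. }
  intros [a|]; auto. constructor. intros [b|] H; [apply HS | destruct H].
Qed.

Lemma ltopt_below (W : word) (x : idx W) o : ltopt (Some x) o <-> belowo o x.
Proof. destruct o; simpl; tauto. Qed.

Lemma wo_asym (W : word) : is_word W -> forall x y : idx W, ltw x y -> ~ ltw y x.
Proof. intros HW x y H H'. exact (wo_irr HW (wo_trans HW H H')). Qed.

Lemma is_word_suffix (w : word) (g : idx w) : is_word w -> is_word (wsuffix g).
Proof.
  intros HW. split; [|split; [|split]].
  - intros [x Hx]; simpl. apply (wo_irr HW).
  - intros [x Hx] [y Hy] [z Hz]; simpl. apply (wo_trans HW).
  - intros [x Hx] [y Hy]; simpl. destruct (wo_tri HW x y) as [H|[H|H]]; auto.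
    right; left. subst. f_equal. apply proof_irrelevance.
  - apply (wf_inverse_image _ _ (@ltw _ _ w) (fun a : {i : idx w | ~ ltw i g} => proj1_sig a)). apply (wo_wf HW).
Qed.

End Pre0.

Section Prod.
Context {disp : Order.disp_t} {A : finOrderType disp}.
Local Notation word := (@word disp A).
Variable J : ord.
Variable u : J -> word.
Hypothesis HJ : is_ordinal J.
Hypothesis Hu : forall j, is_word (u j).
Hypothesis Hne : forall j, inhabited (idx (u j)).
Hypothesis HX : is_word (wprod u).
Hypothesis Hd : dense_nonincr u.

Lemma oirr (j : J) : ~ olt j j.
Proof. destruct HJ as [H _]; apply H. Qed.
Lemma otri_asym (i j : J) : olt j i -> ~ olt i j.
Proof. intros H H'. destruct HJ as [Hi [Ht _]]. exact (Hi _ (Ht _ _ _ H H')). Qed.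
Lemma otrans (i j k : J) : olt i j -> olt j k -> olt i k.
Proof. destruct HJ as [_ [H _]]; apply H. Qed.
Lemma otri (i j : J) : olt i j \/ i = j \/ olt j i.
Proof. destruct HJ as [_ [_ [H _]]]; apply H. Qed.
Lemma owf : well_founded (@olt J).
Proof. destruct HJ as [_ [_ [_ H]]]; apply H. Qed.

Local Notation X := (wprod u).

Lemma wp_lt_diff (p q : idx X) : projT1 p <> projT1 q -> (ltw p q <-> olt (projT1 p) (projT1 q)).
Proof.
  intros Hn. simpl. split; [intros [H|[h _]]|intros H; left]; auto. contradiction.
Qed.

Lemma wp_lt_same (j : J) (a b : idx (u j)) :
  ltw (w:=X) (existT _ j a) (existT _ j b) <-> ltw a b.
Proof.
  simpl. split.
  - intros [H|[h H]]. { exfalso; exact (oirr H). }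
    rewrite (Eqdep.EqdepTheory.UIP_refl _ _ h) in H. exact H.
  - intros H. right. exists (erefl j). exact H.
Qed.

Lemma wp_lt_block (p q : idx X) : ltw p q -> olt (projT1 p) (projT1 q) \/ projT1 p = projT1 q.
Proof. simpl. intros [H|[h _]]; auto. Qed.

Lemma blk_lt (p q : idx X) : olt (projT1 p) (projT1 q) -> ltw p q.
Proof. intros H. simpl. left; auto. Qed.

Lemma Hmin (j : J) : exists a : idx (u j), forall b, ~ ltw b a.
Proof.
  destruct (Hne j) as [a0].
  destruct (@wf_min _ _ (wo_wf (Hu j)) (fun _ => True) (ex_intro _ a0 I)) as [a [_ H]].
  exists a. intros b Hb. exact (H b Hb I).
Qed.

Definition mn (j : J) : idx (u j) := proj1_sig (constructive_indefinite_description _ (Hmin j)).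
Lemma mn_min (j : J) (b : idx (u j)) : ~ ltw b (mn j).
Proof. unfold mn. destruct (constructive_indefinite_description _ (Hmin j)) as [a Ha]. apply Ha. Qed.

Definition st (j : J) : idx X := existT _ j (mn j).
Definition Bk (j : J) : idx X -> Prop := fun p => projT1 p = j.

Lemma st_min (j : J) (p : idx X) : Bk j p -> ~ ltw p (st j).
Proof.
  destruct p as [k a]. unfold Bk; simpl. intros E. subst k. intros H.
  apply (wp_lt_same a (mn j)) in H. exact (mn_min H).
Qed.

Lemma seg_blk (j : J) : seg (a:=u j) (b:=X) TT (Bk j) (fun a => existT _ j a).
Proof.
  split; [|split; [|split]].
  - intros x _. reflexivity.
  - intros [k b] E. unfold Bk in E; simpl in E. subst k. exists b. split; [exact I|auto].
  - intros x y _ _. symmetry. apply wp_lt_same.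
  - intros x _. reflexivity.
Qed.

Lemma HXw : is_word X -> True. Proof. auto. Qed.


Lemma st_le (j : J) (p : idx X) : Bk j p -> p = st j \/ ltw (st j) p.
Proof.
  intros Hp. destruct (wo_tri HX p (st j)) as [H|[H|H]]; auto.
  exfalso; exact (st_min Hp H).
Qed.

Lemma st_lt_iff (j k : J) : ltw (st j) (st k) <-> olt j k.
Proof.
  destruct (classic (j = k)) as [E|E].
  - subst. split; intros H; exfalso; [exact (wo_irr HX H)| exact (oirr H)].
  - apply wp_lt_diff. simpl. auto.
Qed.

Lemma blk_of_lt (p q : idx X) : ltw p q -> ~ olt (projT1 q) (projT1 p).
Proof.
  intros H H'. apply blk_lt in H'. exact (wo_irr HX (wo_trans HX H H')).
Qed.

Lemma st_le_blk (p : idx X) : ltw (st (projT1 p)) p \/ st (projT1 p) = p.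
Proof.
  destruct (st_le (p := p) (j := projT1 p) (erefl _)); auto.
Qed.

Definition isStart (p : idx X) : Prop := forall q : idx X, projT1 q = projT1 p -> ~ ltw q p.

Lemma isStart_st (j : J) : isStart (st j).
Proof. intros q E. apply st_min. exact E. Qed.

Lemma isStart_eq (p : idx X) : isStart p -> p = st (projT1 p).
Proof.
  intros H. destruct (st_le_blk p) as [H'|H']; auto.
  exfalso. exact (H (st (projT1 p)) (erefl _) H').
Qed.

Lemma lt_st_blk (p : idx X) (j : J) : ltw p (st j) -> olt (projT1 p) j.
Proof.
  intros H. destruct (wp_lt_block H) as [H'|H']; auto.
  exfalso. exact (st_min H' H).
Qed.


Lemma LemmaD (j1 j : J) : olt j1 j -> (forall b, ~ olt b j1 -> olt b j -> weq (u b) (u j1)) ->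
  ~ weq (u j) (u j1) -> lt_lex (u j) (u j1).
Proof.
  intros Hj Hc Hn.
  assert (exists g' : option J, forall b, below g' b <-> ~ olt j b) as [g' Hg'].
  { destruct (classic (exists k, olt j k)) as [Hk|Hk].
    - destruct (@wf_min _ _ owf _ Hk) as [k0 [Hk0 Hm]].
      exists (Some k0). intros b; simpl. split.
      + intros Hb Hjb. exact (Hm b Hb Hjb).
      + intros Hb. destruct (otri b j) as [H|[H|H]].
        * exact (otrans H Hk0).
        * subst; auto.
        * contradiction.
    - exists None. intros b; simpl. split; auto. intros _ H. apply Hk; eauto. }
  assert (Hj1 : below g' j1). { apply Hg'. intros H. exact (oirr (otrans H Hj)). }
  destruct (Hd Hj1) as [H|[b [b' [Hb Hbb' Hb' Hlt]]]].
  - exfalso. apply Hn. apply H.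
    + intros H'. exact (oirr (otrans H' Hj)).
    + apply Hg'. apply oirr.
  - apply Hg' in Hb'.
    assert (Hbj : olt b j).
    { destruct (otri b' j) as [H|[H|H]]; [exact (otrans Hbb' H)| subst; auto | contradiction]. }
    assert (Eb := Hc b Hb Hbj).
    destruct (otri b' j) as [H|[H|H]]; [| subst b'; eapply lt_lex_weq_r; eauto | contradiction].
    exfalso. destruct Hlt as [_ Hn'].
    assert (Eb' : weq (u b') (u j1)).
    { apply Hc; auto. intros H1. exact (Hb (otrans Hbb' H1)). }
    apply Hn'. eapply weq_trans; [exact Eb'|apply weq_sym; exact Eb].
Qed.

Lemma NP (G : J -> Prop) (c w : word) (psi : idx w -> idx X) :
  is_word c -> is_word w -> primitive w -> (forall j, G j -> weq (u j) c) ->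
  @seg _ _ w X TT (fun r => G (projT1 r)) psi ->
  forall j j', G j -> G j' -> j = j'.
Proof.
  intros Hc Hw Hpr Hwq Hpsi.
  set (OG := subord G).
  assert (HOG : is_ordinal OG) by (apply subord_ok; auto).
  assert (HH : forall k : OG, {h : idx (u (proj1_sig k)) -> idx c | @seg _ _ (u (proj1_sig k)) c TT TT h}).
  { intros k. apply constructive_indefinite_description. apply weq_seg. apply Hwq. exact (proj2_sig k). }
  set (hh := fun k : OG => proj1_sig (HH k)).
  assert (Hhh : forall k, @seg _ _ (u (proj1_sig k)) c TT TT (hh k)) by (intros k; exact (proj2_sig (HH k))).
  set (Fp := fun (r : idx X) (P : G (projT1 r)) =>
    (existT (fun _ : OG => idx c) (exist G (projT1 r) P) (hh (exist G (projT1 r) P) (projT2 r))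
      : idx (wpow c OG))).
  assert (pf : forall x, G (projT1 (psi x))) by (intros x; exact (proj1 Hpsi x I)).
  set (F := fun x => Fp (psi x) (pf x)).
  assert (FE : forall x j a, psi x = existT _ j a -> exists P : G j,
      F x = existT (fun _ : OG => idx c) (exist G j P) (hh (exist G j P) a)).
  { intros x j a E. unfold F. generalize (pf x). rewrite E. intros P. exists P. reflexivity. }
  assert (Inj : forall x y, F x = F y -> x = y).
  { intros x y E. destruct (psi x) as [j a] eqn:Ex. destruct (psi y) as [k b] eqn:Ey.
    destruct (FE x j a Ex) as [P Ex']. destruct (FE y k b Ey) as [Q Ey'].
    rewrite Ex' Ey' in E.
    assert (Ejk : exist G j P = exist G k Q) by exact (f_equal (@projT1 _ _) E).
    assert (j = k) by exact (f_equal (@proj1_sig _ _) Ejk). subst k.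
    assert (P = Q) by apply proof_irrelevance. subst Q.
    apply Eqdep.EqdepTheory.inj_pair2 in E.
    assert (a = b).
    { apply (seg_inj (Hu j) Hc (Hhh (exist G j P))); unfold TT; auto. }
    subst b. apply (seg_inj Hw HX Hpsi); unfold TT; auto. rewrite Ex Ey; auto. }
  assert (Hs : @seg _ _ w (wpow c OG) TT TT F).
  { split; [|split; [|split]]; unfold TT.
    - auto.
    - intros [k b] _. destruct (proj1 (proj2 (Hhh k)) b I) as [a [_ Ea]].
      destruct (proj1 (proj2 Hpsi) (existT _ (proj1_sig k) a) (proj2_sig k)) as [x [_ Ex]].
      exists x. split; auto. destruct (FE x _ _ Ex) as [P E]. rewrite E.
      destruct k as [j Pj]. simpl in *. assert (P = Pj) by apply proof_irrelevance. subst P.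
      rewrite Ea. reflexivity.
    - intros x y _ _. rewrite (proj1 (proj2 (proj2 Hpsi)) x y I I).
      destruct (psi x) as [j a] eqn:Ex. destruct (psi y) as [k b] eqn:Ey.
      destruct (FE x j a Ex) as [P Ex']. destruct (FE y k b Ey) as [Q Ey'].
      rewrite Ex' Ey'.
      destruct (classic (j = k)) as [Ejk|Ejk].
      + subst k. assert (P = Q) by apply proof_irrelevance. subst Q.
        rewrite (gwp_lt_same (u:=u) oirr). rewrite (gwp_lt_same (u := fun _ : OG => c) (proj1 HOG)).
        apply (proj1 (proj2 (proj2 (Hhh (exist G j P))))); unfold TT; auto.
      + rewrite (gwp_lt_diff (u:=u)); [|simpl; auto].
        rewrite (gwp_lt_diff (u:=fun _ : OG => c)); [simpl; tauto|].
        simpl. intros E. apply Ejk. exact (f_equal (@proj1_sig _ _) E).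
    - intros x _. destruct (psi x) as [j a] eqn:Ex. destruct (FE x j a Ex) as [P Ex'].
      rewrite Ex'. rewrite <- (proj2 (proj2 (proj2 Hpsi)) x I). rewrite Ex. simpl.
      apply (proj2 (proj2 (proj2 (Hhh (exist G j P))))). exact I. }
  intros j j' Gj Gj'.
  destruct (Hpr c OG Hc HOG (seg_weq' Hs Inj)) as [[t Ht] _].
  assert (E : exist G j Gj = exist G j' Gj') by (rewrite (Ht (exist G j Gj)) (Ht (exist G j' Gj')); auto).
  exact (f_equal (@proj1_sig _ _) E).
Qed.


Section KeyS.
Variable i : J.
Variable Wt : idx X -> Prop.
Hypothesis HWt : forall r r', Wt r -> ltw r' r -> Wt r'.
Variable w : word.
Hypothesis Hw : is_word w.
Hypothesis Hpw : prime_word w.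
Variable psi : idx w -> idx X.
Definition KW (r : idx X) : Prop := ~ ltw r (st i) /\ Wt r.
Hypothesis Hpsi : seg (a:=w) (b:=X) TT KW psi.
Hypothesis Hbey : exists r, KW r /\ olt i (projT1 r).
Definition KZ (q r : idx X) : Prop := KW r /\ ~ ltw r q.
Definition KM (j : J) : Prop := olt i j /\ Wt (st j).

Lemma K_Ws : KW (st i).
Proof.
  destruct Hbey as [r [[_ Wr] Hr]]. split; [apply (wo_irr HX)|].
  apply (HWt Wr). apply blk_lt. exact Hr.
Qed.

Lemma K_SBi : forall y, Bk i y -> KW y.
Proof.
  intros y Hy. destruct Hbey as [r [[_ Wr] Hr]]. split.
  - apply st_min; auto.
  - apply (HWt Wr). apply blk_lt. unfold Bk in Hy. rewrite Hy. exact Hr.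
Qed.

Lemma K_DBi : dclosed (Bk i) KW.
Proof.
  intros y y' Hy [Hy' _] Hl. destruct (wp_lt_block Hl) as [H|H].
  - exfalso. apply Hy'. apply blk_lt. unfold Bk in Hy. rewrite Hy in H. exact H.
  - unfold Bk in *. rewrite H; auto.
Qed.

Lemma K_Rr : exists r, KW r /\ ~ Bk i r.
Proof.
  destruct Hbey as [r [Wr Hr]]. exists r. split; auto. unfold Bk. intros E. rewrite E in Hr. exact (oirr Hr).
Qed.

Lemma K_PW : forall q, KW q -> Le (a:=X) (b:=X) KW (KZ q).
Proof.
  intros q Wq.
  destruct (wo_tri HX q (st i)) as [H|[H|H]].
  - exfalso; exact (proj1 Wq H).
  - subst q. left. apply Pre_sub.
    + intros y Wy. split; auto. exact (proj1 Wy).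
    + intros y y' _ [Wy' _] _. exact Wy'.
  - destruct (proj1 (proj2 Hpsi) q Wq) as [gq [_ Egq]].
    destruct (proj1 (proj2 Hpsi) (st i) K_Ws) as [gs [_ Egs]].
    assert (Hpp : proper_pos gq).
    { exists gs. apply (proj1 (proj2 (proj2 Hpsi)) gs gq I I). rewrite Egs Egq. exact H. }
    assert (HL := CVle (proj2 Hpw gq Hpp)).
    assert (Hsf : seg (a:=wsuffix gq) (b:=X) TT (KZ q) (fun x => psi (proj1_sig x))).
    { split; [|split; [|split]].
      - intros [x Hx] _. simpl. split; [apply (proj1 Hpsi); exact I|].
        intros Hl. apply Hx. rewrite <- Egq in Hl. apply (proj2 (proj1 (proj2 (proj2 Hpsi)) x gq I I)) in Hl. exact Hl.
      - intros y [Wy Hy]. destruct (proj1 (proj2 Hpsi) y Wy) as [x [_ Ex]].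
        assert (Hx : ~ ltw x gq).
        { intros Hl. apply Hy. rewrite <- Ex, <- Egq. apply (proj1 (proj2 (proj2 Hpsi)) x gq I I). exact Hl. }
        exists (exist _ x Hx). split; [exact I|]. exact Ex.
      - intros [x Hx] [y Hy] _ _. simpl. apply (proj1 (proj2 (proj2 Hpsi))); exact I.
      - intros [x Hx] _. simpl. apply (proj2 (proj2 (proj2 Hpsi))); exact I. }
    destruct HL as [HL|HL].
    + left. exact (Pre_transfer HX Hw (is_word_suffix gq Hw) HL Hpsi Hsf).
    + right. exact (Str_transfer HX Hw (is_word_suffix gq Hw) HL Hpsi Hsf).
Qed.

Lemma K_Wblk : forall r, KW r -> projT1 r = i \/ KM (projT1 r).
Proof.
  intros r [Hr Wr]. destruct (otri (projT1 r) i) as [H|[H|H]]; auto.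
  - exfalso. apply Hr. apply blk_lt. exact H.
  - right. split; auto. destruct (st_le_blk r) as [H'|H'].
    + exact (HWt Wr H').
    + rewrite H'. exact Wr.
Qed.

Lemma K_MW : forall j, KM j -> KW (st j) /\ ltw (st i) (st j).
Proof.
  intros j [Hij Wj]. assert (H : ltw (st i) (st j)) by (apply st_lt_iff; auto).
  split; auto. split; auto. apply (wo_asym HX H).
Qed.

Lemma K_Zsub_yes : forall j, KM j -> (exists r, KW r /\ olt j (projT1 r)) ->
  (forall y, Bk j y -> KZ (st j) y) /\ dclosed (Bk j) (KZ (st j)).
Proof.
  intros j [Hij Wj] [r [[_ Wr] Hr]]. split.
  - intros y Hy. split; [split|].
    + apply (wo_asym HX). apply blk_lt. unfold Bk in Hy. simpl. rewrite Hy. exact Hij.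
    + apply (HWt Wr). apply blk_lt. unfold Bk in Hy. rewrite Hy. exact Hr.
    + apply st_min; auto.
  - intros y y' Hy [_ Hy'] Hl. destruct (wp_lt_block Hl) as [H|H].
    + exfalso. apply Hy'. apply blk_lt. unfold Bk in Hy. rewrite Hy in H. exact H.
    + unfold Bk in *. rewrite H; auto.
Qed.

Lemma K_Zsub_no : forall j, KM j -> ~ (exists r, KW r /\ olt j (projT1 r)) ->
  Pre (a:=X) (b:=X) (KZ (st j)) (Bk j).
Proof.
  intros j [Hij Wj] Hn. apply Pre_sub.
  - intros y [Wy Hy]. unfold Bk. destruct (otri (projT1 y) j) as [H|[H|H]]; auto.
    + exfalso. apply Hy. apply blk_lt. exact H.
    + exfalso. apply Hn. exists y; auto.
  - intros y y' [[_ Wy] _] Hy' Hl. split; [split|].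
    + apply (wo_asym HX). apply blk_lt. unfold Bk in Hy'. simpl. rewrite Hy'. exact Hij.
    + exact (HWt Wy Hl).
    + apply st_min; auto.
Qed.

Definition oinI (o : option (idx X)) : Prop := match o with Some q => Bk i q | None => True end.
Definition PreAt (j : J) (o : option (idx X)) : Prop :=
  oinI o /\ exists e, seg (a:=X) (b:=X) (Bk j) (fun p => Bk i p /\ belowo o p) e.
Definition Cand (o : option (idx X)) : Prop := exists j, (j = i \/ KM j) /\ PreAt j o.

Lemma K_cand_ex : exists o1, Cand o1 /\ forall o, ltopt o o1 -> ~ Cand o.
Proof.
  apply (wf_min (ltopt_wf HX)). exists None, i. split; auto. split; [exact I|].
  exists (fun x => x). apply (seg_ext (seg_id (Bk i))); intros; simpl; tauto.
Qed.

Section J1.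
Variable j1 : J.
Variable o1 : option (idx X).
Variable e : idx X -> idx X.
Hypothesis Hj1 : j1 = i \/ KM j1.
Hypothesis Ho1 : oinI o1.
Hypothesis He : seg (a:=X) (b:=X) (Bk j1) (fun p => Bk i p /\ belowo o1 p) e.
Hypothesis Hmin : forall o, ltopt o o1 -> ~ Cand o.

Lemma K_PreJ1 : Pre (a:=X) (b:=X) (Bk j1) (Bk i).
Proof.
  exists e, (fun p => Bk i p /\ belowo o1 p). split; [exact He|split].
  - intros y [H _]; exact H.
  - intros y y' [Hy Hb] Hy' Hl. split; auto. destruct o1 as [b|]; simpl in *; auto.
    exact (wo_trans HX Hl Hb).
Qed.

Lemma K_ij1 : forall j, olt j1 j -> olt i j.
Proof. intros j H. destruct Hj1 as [E|[H' _]]; [subst; auto | exact (otrans H' H)]. Qed.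

Lemma K_claimA : forall j, KM j -> olt j1 j -> weq (u j) (u j1).
Proof.
  apply NNPP. intros Hn. apply not_all_ex_not in Hn. destruct Hn as [j0 Hj0].
  destruct (@wf_min _ _ owf (fun j => KM j /\ olt j1 j /\ ~ weq (u j) (u j1))) as [j [[HMj [Hj Hnw]] Hm]].
  { exists j0. apply NNPP. intros H. apply Hj0. intros HM Hl. apply NNPP. intros Hw'. apply H. auto. }
  assert (HD : lt_lex (u j) (u j1)).
  { apply LemmaD; auto. intros b Hb Hbj. destruct (otri b j1) as [H|[H|H]].
    - contradiction.
    - subst. apply weq_refl.
    - apply NNPP. intros Hnb. apply (Hm b Hbj). split; [|split; auto].
      split; [exact (K_ij1 H)|]. destruct HMj as [_ Wj]. apply (HWt Wj). apply st_lt_iff; auto. }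
  destruct (CVlt (Hu j) (Hu j1) HD) as [HP|HS].
  - destruct (PPre_transfer HX (Hu j) (Hu j1) HP (seg_blk j) (seg_blk j1)) as [q [f [Bq Hf]]].
    assert (Heq := proj1 He q Bq).
    assert (Hc := seg_comp Hf (seg_lt HX HX He Bq)).
    apply (Hmin (o := Some (e q))).
    + apply ltopt_below. exact (proj2 Heq).
    + exists j. split; [right; exact HMj|]. split; [exact (proj1 Heq)|].
      exists (fun x => e (f x)). eapply seg_ext; [exact Hc | tauto |].
      intros y; simpl. split.
      * intros [H1 H2]. split; auto. split; auto. destruct o1 as [b|]; simpl in *; auto.
        exact (wo_trans HX H2 (proj2 Heq)).
      * intros [[H1 _] H2]. auto.
  - assert (HS' := Str_transfer HX (Hu j) (Hu j1) HS (seg_blk j) (seg_blk j1)).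
    assert (HS2 := Str_pre_r HX HS' K_PreJ1).
    destruct (K_MW HMj) as [Wsj Hsj].
    destruct (classic (exists r, KW r /\ olt j (projT1 r))) as [Hy|Hy].
    + destruct (K_Zsub_yes HMj Hy) as [S D].
      exact (Anti2 HX (K_PW Wsj) (Str_mono_l HX HS2 S D) K_SBi K_DBi).
    + destruct (Pre_str HX (K_Zsub_no HMj Hy) HS2) as [HP|HP].
      * exact (Anti1 HX (K_PW Wsj) HP K_SBi K_DBi K_Rr).
      * exact (Anti2 HX (K_PW Wsj) HP K_SBi K_DBi).
Qed.

Lemma K_iso : forall l, (l = j1 \/ (KM l /\ olt j1 l)) -> exists h, seg (a:=X) (b:=X) (Bk l) (Bk j1) h.
Proof.
  intros l [E|[HM Hl]].
  - subst. exists (fun x => x). apply seg_id.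
  - destruct (weq_seg (K_claimA HM Hl)) as [h0 Hh0].
    destruct (seg_inv (Hu l) HX (seg_blk l) (Hne l)) as [g [Hg _]].
    exists (fun x => existT _ j1 (h0 (g x))).
    exact (seg_comp (seg_comp Hg Hh0) (seg_blk j1)).
Qed.

Lemma K_PreL : forall l, (l = j1 \/ (KM l /\ olt j1 l)) -> Pre (a:=X) (b:=X) (Bk l) (Bk i).
Proof. intros l Hl. destruct (K_iso Hl) as [h Hh]. exact (Pre_trans HX (Pre_seg Hh) K_PreJ1). Qed.

Lemma K_noPreW : Pre (a:=X) (b:=X) KW (Bk i) -> False.
Proof.
  intros HP. apply (Anti1 HX (W := KW) (Z := KW) (B := Bk i)); auto.
  - left. apply Pre_sub; [auto | apply dclosed_refl].
  - exact K_SBi.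
  - exact K_DBi.
  - exact K_Rr.
Qed.

Lemma blk_mid (y q : idx X) (k : J) : ~ ltw y (st k) -> ltw y q -> projT1 q = k -> projT1 y = k.
Proof.
  intros H1 H2 E. destruct (otri (projT1 y) k) as [H|[H|H]]; auto.
  - exfalso. apply H1. apply blk_lt. exact H.
  - exfalso. apply (blk_of_lt H2). rewrite E. exact H.
Qed.

Lemma K_notmax : ~ exists l, KM l /\ forall l', KM l' -> ~ olt l l'.
Proof.
  intros [l [HMl Hmax]].
  assert (Hl : l = j1 \/ (KM l /\ olt j1 l)).
  { destruct Hj1 as [E|HM1].
    - subst. right. split; auto. exact (proj1 HMl).
    - destruct (otri l j1) as [H|[H|H]]; auto.
      exfalso. exact (Hmax j1 HM1 H). }
  assert (Hn : ~ (exists r, KW r /\ olt l (projT1 r))).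
  { intros [r [Wr Hr]]. destruct (K_Wblk Wr) as [E|HM].
    - rewrite E in Hr. exact (oirr (otrans (proj1 HMl) Hr)).
    - exact (Hmax _ HM Hr). }
  assert (HP := Pre_trans HX (K_Zsub_no HMl Hn) (K_PreL Hl)).
  exact (Anti1 HX (K_PW (proj1 (K_MW HMl))) HP K_SBi K_DBi K_Rr).
Qed.

Lemma K_NM : forall l, KM l -> exists l', KM l' /\ olt l l'.
Proof.
  intros l HM. apply NNPP. intros Hn. apply K_notmax. exists l. split; auto.
  intros l' HM' Hl. apply Hn. eauto.
Qed.

Lemma K_Wiff : forall r, KW r <-> (projT1 r = i \/ KM (projT1 r)).
Proof.
  intros r. split; [apply K_Wblk|]. intros [E|HM].
  - apply K_SBi. exact E.
  - destruct (K_NM HM) as [l' [[_ Wl'] Hl']]. split.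
    + apply (wo_asym HX). apply blk_lt. exact (proj1 HM).
    + apply (HWt Wl'). apply blk_lt. exact Hl'.
Qed.

Lemma K_case_i : j1 = i -> False.
Proof.
  intros E.
  assert (HG : forall j, (j = i \/ KM j) -> weq (u j) (u i)).
  { intros j [Ej|HM]. - subst; apply weq_refl.
    - rewrite <- E. apply K_claimA; auto. rewrite E. exact (proj1 HM). }
  assert (Hs : seg (a:=w) (b:=X) TT (fun r => (fun j => j = i \/ KM j) (projT1 r)) psi).
  { eapply seg_ext; [exact Hpsi | tauto |]. intros y. symmetry. apply K_Wiff. }
  destruct Hbey as [r [Wr Hr]].
  assert (Gr : projT1 r = i \/ KM (projT1 r)) by (apply K_Wiff; auto).
  assert (Eq := NP (Hu i) Hw (proj1 Hpw) HG Hs (or_introl (erefl i)) Gr).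
  rewrite <- Eq in Hr. exact (oirr Hr).
Qed.

Lemma K_noPreW1 : Pre (a:=X) (b:=X) KW (Bk j1) -> False.
Proof. intros HP. apply K_noPreW. exact (Pre_trans HX HP K_PreJ1). Qed.

Section CaseM.
Hypothesis HM1 : KM j1.
Definition KG1 (j : J) : Prop := KM j /\ ~ olt j j1.

Lemma K_Tiff : forall r, KZ (st j1) r <-> KG1 (projT1 r).
Proof.
  intros r. split.
  - intros [Wr Hr]. destruct (K_Wblk Wr) as [E|HM].
    + exfalso. apply Hr. apply blk_lt. rewrite E. exact (proj1 HM1).
    + split; auto. intros Hl. apply Hr. apply blk_lt. exact Hl.
  - intros [HM Hn]. split.
    + apply K_Wiff. auto.
    + intros Hl. apply Hn. exact (lt_st_blk Hl).
Qed.

Lemma K_G1iso : forall k, KG1 k -> k = j1 \/ (KM k /\ olt j1 k).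
Proof.
  intros k [HM Hn]. destruct (otri k j1) as [H|[H|H]]; auto. contradiction.
Qed.

Lemma K_G1weq : forall k, KG1 k -> weq (u k) (u j1).
Proof.
  intros k Hk. destruct (K_G1iso Hk) as [E|[HM Hl]].
  - subst; apply weq_refl.
  - apply K_claimA; auto.
Qed.

Lemma K_final (x p p' : idx X) (m : idx X -> idx X) :
  KW x -> KZ x p -> KG1 (projT1 p') ->
  seg (a:=X) (b:=X) (fun y => KZ x y /\ ltw y p) (fun y => Bk (projT1 p') y /\ ltw y p') m ->
  (lab p < lab p')%O -> False.
Proof.
  intros Wx Zp G Hm Hlab.
  destruct (K_iso (K_G1iso G)) as [h Hh].
  assert (Bp' : Bk (projT1 p') p') by reflexivity.
  assert (Bh : Bk j1 (h p')) by (apply (proj1 Hh); auto).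
  assert (Be := proj1 He (h p') Bh).
  assert (Hc := seg_comp (seg_comp Hm (seg_lt HX HX Hh Bp')) (seg_lt HX HX He Bh)).
  assert (Hc' : seg (a:=X) (b:=X) (fun y => KZ x y /\ ltw y p) (fun y => KW y /\ ltw y (e (h p')))
      (fun y => e (h (m y)))).
  { eapply seg_ext; [exact Hc | tauto |]. intros y. split.
    - intros [Wy Hl]. split; auto. split; [exact (K_DBi (proj1 Be) Wy Hl)|].
      destruct o1 as [b|]; simpl in *; auto. exact (wo_trans HX Hl (proj2 Be)).
    - intros [[H1 _] H2]. split; auto. apply K_SBi; auto. }
  assert (HS : Str (a:=X) (b:=X) (KZ x) KW).
  { exists p, (e (h p')), (fun y => e (h (m y))). split; [exact Zp|split; [apply K_SBi; exact (proj1 Be)|split; [exact Hc'|]]].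
    rewrite (proj2 (proj2 (proj2 He)) (h p') Bh) (proj2 (proj2 (proj2 Hh)) p' Bp'). exact Hlab. }
  exact (Anti2 HX (K_PW Wx) HS (fun y H => H) (dclosed_refl (C:=KW))).
Qed.

Lemma K_case_M : False.
Proof.
  destruct (K_MW HM1) as [Ws1 Hs1].
  destruct (K_NM HM1) as [l' [HMl' Hl']].
  assert (Gl' : KG1 l') by (split; auto; apply (otri_asym Hl')).
  assert (G1j1 : KG1 j1) by (split; auto; apply oirr).
  destruct (K_PW Ws1) as [[f [F' [Hf [SF DF]]]] | [p [p' [g [Wp [Tp' [Hg Hlab]]]]]]].
  - destruct (classic (forall r, KZ (st j1) r -> F' r)) as [Hfull|Hnf].
    + assert (Hs : seg (a:=w) (b:=X) TT (fun r => KG1 (projT1 r)) (fun x => f (psi x))).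
      { eapply seg_ext; [exact (seg_comp Hpsi Hf) | tauto |].
        intros y. rewrite <- K_Tiff. split; auto. }
      assert (Eq := NP (Hu j1) Hw (proj1 Hpw) K_G1weq Hs G1j1 Gl').
      rewrite <- Eq in Hl'. exact (oirr Hl').
    + assert (Hex : exists r, KZ (st j1) r /\ ~ F' r).
      { apply NNPP. intros H. apply Hnf. intros r Hr. apply NNPP. intros Hr'. apply H. eauto. }
      destruct (wf_min (wo_wf HX) Hex) as [p [[Tp Fp] Hm]].
      assert (F'iff : forall y, F' y <-> KZ (st j1) y /\ ltw y p).
      { intros y. split.
        - intros Fy. split; [exact (SF _ Fy)|]. destruct (wo_tri HX y p) as [H|[H|H]]; auto.
          + subst; contradiction.
          + exfalso. apply Fp. exact (DF y p Fy Tp H).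
        - intros [Ty Hy]. apply NNPP. intros Fy. exact (Hm y Hy (conj Ty Fy)). }
      set (k := projT1 p).
      assert (Gk : KG1 k) by (apply K_Tiff; exact Tp).
      assert (Fs : F' (f (st i))) by (apply (proj1 Hf); exact K_Ws).
      destruct (st_le_blk p) as [Hsp|Hsp].
      *
        destruct (classic (k = j1)) as [Ek|Ek].
        { apply K_noPreW1. exists f, F'. split; [exact Hf|split].
          - intros y Fy. apply F'iff in Fy. destruct Fy as [[_ Hy1] Hy2].
            unfold Bk. exact (blk_mid Hy1 Hy2 Ek).
          - intros y y' Fy By' Hl. apply F'iff in Fy. apply F'iff. destruct Fy as [_ Hyp].
            split; [apply K_Tiff; rewrite By'; exact G1j1 | exact (wo_trans HX Hl Hyp)]. }
        assert (Hjk : olt j1 k).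
        { destruct (K_G1iso Gk) as [E|[_ H]]; [contradiction|exact H]. }
        assert (Fk : F' (st k)).
        { apply F'iff. split; [apply K_Tiff; exact Gk| exact Hsp]. }
        destruct (proj1 (proj2 Hf) (st k) Fk) as [x [Wx Ex]].
        assert (Hseg : seg (a:=X) (b:=X) (KZ x) (fun y => Bk k y /\ ltw y p) f).
        { eapply seg_ext; [exact (seg_restr Hf (SA' := KZ x) (fun y H => proj1 H)) | tauto |].
          intros y. split.
          - intros [By Hyp]. assert (Fy : F' y) by (apply F'iff; split; auto; apply K_Tiff; rewrite By; exact Gk).
            destruct (proj1 (proj2 Hf) y Fy) as [x'' [Wx'' Ex'']].
            exists x''. split; auto. split; auto. intros Hl.
            apply (proj1 (proj2 (proj2 Hf)) x'' x Wx'' Wx) in Hl. rewrite Ex'' Ex in Hl.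
            exact (st_min By Hl).
          - intros [x'' [[Wx'' Hx''] E'']]. rewrite <- E''.
            assert (Fy : F' (f x'')) by (apply (proj1 Hf); exact Wx'').
            apply F'iff in Fy. destruct Fy as [_ Hyp]. split; auto.
            assert (Hnl : ~ ltw (f x'') (st k)).
            { rewrite <- Ex. intros Hl. apply Hx''. apply (proj1 (proj2 (proj2 Hf)) x'' x Wx'' Wx). exact Hl. }
            exact (blk_mid Hnl Hyp (erefl _)). }
        assert (HP : Pre (a:=X) (b:=X) (KZ x) (Bk k)).
        { apply (Pre_mono (Pre_seg Hseg)); [intros y [H _]; exact H | apply dclosed_lt; exact HX]. }
        assert (HP2 := Pre_trans HX HP (K_PreL (K_G1iso Gk))).
        exact (Anti1 HX (K_PW Wx) HP2 K_SBi K_DBi K_Rr).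
      *
        assert (Hjk : olt j1 k).
        { destruct (K_G1iso Gk) as [E|[_ H]]; auto. exfalso.
          apply F'iff in Fs. destruct Fs as [[_ H1] H2]. apply H1. rewrite <- E.
          fold k in Hsp. rewrite Hsp. exact H2. }
        set (G2 := fun j => KG1 j /\ olt j k).
        assert (F'2 : forall y, F' y <-> G2 (projT1 y)).
        { intros y. rewrite F'iff K_Tiff. unfold G2. fold k in Hsp. rewrite <- Hsp.
          split; intros [H1 H2]; split; auto.
          - exact (lt_st_blk H2).
          - apply blk_lt. exact H2. }
        assert (Hs : seg (a:=w) (b:=X) TT (fun r => G2 (projT1 r)) (fun x => f (psi x))).
        { eapply seg_ext; [exact (seg_comp Hpsi Hf) | tauto |]. intros y. symmetry. apply F'2. }
        assert (G2j1 : G2 j1) by (split; auto).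
        assert (HG2 : forall j, G2 j -> weq (u j) (u j1)) by (intros j [Gj _]; apply K_G1weq; auto).
        apply K_noPreW1. exists f, F'. split; [exact Hf|split].
        { intros y Fy. apply F'2 in Fy. exact (NP (Hu j1) Hw (proj1 Hpw) HG2 Hs Fy G2j1). }
        { intros y y' _ By' _. apply F'2. unfold Bk in By'. rewrite By'. exact G2j1. }
  - set (k := projT1 p').
    assert (Gk : KG1 k) by (apply K_Tiff; exact Tp').
    destruct (classic (k = j1)) as [Ek|Ek].
    + apply (@K_final (st i) p p' g K_Ws).
      * split; auto. exact (proj1 Wp).
      * exact Gk.
      * eapply seg_ext; [exact Hg| |].
        { intros y. split.
          - intros [[Wy _] H2]. split; auto.
          - intros [Wy H2]. split; auto. split; auto. exact (proj1 Wy). }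
        { intros y. split.
          - intros [By Hy]. split; auto. apply K_Tiff. unfold Bk in By. rewrite By. exact Gk.
          - intros [[Wy Hy1] Hy2]. split; auto. unfold Bk. fold k. rewrite Ek.
            exact (blk_mid Hy1 Hy2 Ek). }
      * exact Hlab.
    + assert (Hjk : olt j1 k).
      { destruct (K_G1iso Gk) as [E|[_ H]]; [contradiction|exact H]. }
      destruct (st_le_blk p') as [Hsp|Hsp].
      * destruct (proj1 (proj2 Hg) (st k)) as [x [[Wx Hxp] Ex]].
        { split; [apply K_Tiff; exact Gk | exact Hsp]. }
        apply (@K_final x p p' g Wx).
        { split; auto. exact (wo_asym HX Hxp). }
        { exact Gk. }
        { eapply seg_ext; [exact (seg_restr Hg (SA' := fun y => KZ x y /\ ltw y p) (fun y H => conj (proj1 (proj1 H)) (proj2 H))) | tauto |].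
          intros y. split.
          - intros [By Hy]. 
            destruct (proj1 (proj2 Hg) y) as [x'' [[Wx'' Hx''] E'']].
            { split; auto. apply K_Tiff. unfold Bk in By. rewrite By. exact Gk. }
            exists x''. split; auto. split; auto. split; auto. intros Hl.
            apply (proj1 (proj2 (proj2 Hg)) x'' x (conj Wx'' Hx'') (conj Wx Hxp)) in Hl.
            rewrite E'' Ex in Hl. exact (st_min By Hl).
          - intros [x'' [[[Wx'' Hx''] Hx2] E'']]. rewrite <- E''.
            assert (Hm := proj1 Hg x'' (conj Wx'' Hx2)). destruct Hm as [_ Hm2]. split.
            + assert (Hnl : ~ ltw (g x'') (st k)).
              { rewrite <- Ex. intros Hl. apply Hx''.
                apply (proj1 (proj2 (proj2 Hg)) x'' x (conj Wx'' Hx2) (conj Wx Hxp)). exact Hl. }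
              exact (blk_mid Hnl Hm2 (erefl _)).
            + exact Hm2. }
        { exact Hlab. }
      * apply (@K_final p p p' (fun y => y) Wp).
        { split; auto. apply (wo_irr HX). }
        { exact Gk. }
        { split; [|split; [|split]].
          - intros y [[_ H1] H2]. contradiction.
          - intros y [By Hy]. exfalso. fold k in Hsp. rewrite <- Hsp in Hy. exact (st_min By Hy).
          - intros y y' [[_ H1] H2]. contradiction.
          - intros y [[_ H1] H2]. contradiction. }
        { exact Hlab. }
Qed.

End CaseM.
End J1.
Lemma Key : False.
Proof.
  destruct K_cand_ex as [o1 [[j1 [Hj1 [Ho1 [e He]]]] Hmin]].
  destruct (classic (j1 = i)) as [E|NE].
  - exact (K_case_i Hj1 Ho1 He Hmin E).
  - assert (HM1 : KM j1) by (destruct Hj1; [contradiction|auto]).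
    exact (K_case_M Hj1 Ho1 He Hmin HM1).
Qed.

End KeyS.
End Prod.


Section Sym.
Context {disp : Order.disp_t} {A : finOrderType disp}.
Local Notation word := (@word disp A).
Variables (J K : ord) (u : J -> word) (v : K -> word).
Hypotheses (HJ : is_ordinal J) (HK : is_ordinal K).
Hypotheses (Hu : forall j, is_word (u j)) (Hv : forall k, is_word (v k)).
Hypotheses (Hneu : forall j, inhabited (idx (u j))) (Hnev : forall k, inhabited (idx (v k))).
Hypotheses (HXu : is_word (wprod u)) (HXv : is_word (wprod v)).
Hypothesis Hdu : dense_nonincr u.
Hypothesis Hpv : forall k, prime_word (v k).
Local Notation X := (wprod u).
Local Notation Y := (wprod v).
Variable phi : idx X -> idx Y.
Variable phi' : idx Y -> idx X.
Hypothesis Hphi : seg (a:=X) (b:=Y) TT TT phi.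
Hypothesis Hphi' : seg (a:=Y) (b:=X) TT TT phi'.
Hypothesis Hinv1 : forall x, phi' (phi x) = x.
Hypothesis Hinv2 : forall y, phi (phi' y) = y.
Local Notation stU := (st Hu Hneu).
Local Notation stV := (st Hv Hnev).

Lemma phi_lt (x y : idx X) : ltw x y <-> ltw (phi x) (phi y).
Proof. exact (proj1 (proj2 (proj2 Hphi)) x y I I). Qed.
Lemma phi'_lt (x y : idx Y) : ltw x y <-> ltw (phi' x) (phi' y).
Proof. exact (proj1 (proj2 (proj2 Hphi')) x y I I). Qed.

Lemma Step (p : idx X) : isStart p -> ~ isStart (phi p) ->
  (forall p', ltw p' p -> (isStart p' <-> isStart (phi p'))) -> False.
Proof.
  intros Sp Snp Hmin.
  set (k := projT1 (phi p)).
  assert (Hsk : ltw (stV k) (phi p)).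
  { destruct (st_le_blk HK Hv Hnev HXv (phi p)) as [H|H]; auto.
    exfalso. apply Snp. rewrite <- H. apply (isStart_st HK). }
  set (s := phi' (stV k)).
  assert (Hsp : ltw s p) by (rewrite <- (Hinv1 p); apply phi'_lt; exact Hsk).
  assert (Ss : isStart s).
  { apply (Hmin s Hsp). unfold s. rewrite Hinv2. intros q E. apply (isStart_st HK). exact E. }
  set (i := projT1 s).
  assert (Es : s = stU i) by exact (isStart_eq HJ Hu Hneu HXu Ss).
  set (Wt := fun r : idx X => exists r', projT1 (phi r') = k /\ ~ ltw r' r).
  assert (HWt : forall r r', Wt r -> ltw r' r -> Wt r').
  { intros r r'' [r' [E H]] Hl. exists r'. split; auto. intros Hl'. exact (H (wo_trans HXu Hl' Hl)). }
  assert (HKW : forall r, KW Hu Hneu i Wt r <-> exists y, projT1 y = k /\ phi' y = r).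
  { intros r. unfold KW. fold stU. rewrite <- Es. split.
    - intros [Hr [r' [E Hr']]]. exists (phi r). split; [|apply Hinv1].
      assert (H1 : ~ ltw (phi r) (stV k)).
      { intros Hl. apply Hr. unfold s. rewrite <- (Hinv1 r). apply phi'_lt. exact Hl. }
      destruct (wo_tri HXu r r') as [H|[H|H]].
      + apply phi_lt in H. exact (blk_mid HK HXv H1 H E).
      + subst. exact E.
      + contradiction.
    - intros [y [E Er]]. subst r. split.
      + intros Hl. unfold s in Hl. apply phi'_lt in Hl. exact (st_min HK E Hl).
      + exists (phi' y). rewrite Hinv2. split; auto. apply (wo_irr HXu). }
  assert (Hpsi : seg (a:=v k) (b:=X) TT (KW Hu Hneu i Wt) (fun b => phi' (existT _ k b))).
  { eapply seg_ext; [exact (seg_comp (seg_blk v HK k) (seg_restr Hphi' (SA' := Bk k) (fun _ _ => I))) | tauto |].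
    intros y. rewrite HKW. unfold Bk. tauto. }
  apply (Key HJ HXu Hdu HWt (Hv k) (Hpv k) Hpsi).
  exists p. split.
  - apply HKW. exists (phi p). split; auto.
  - destruct (wp_lt_block Hsp) as [H|H]; [exact H|].
    exfalso. exact (Sp s H Hsp).
Qed.

Lemma BlkU (Hc : forall p, isStart p <-> isStart (phi p)) (j : J) (a : idx (u j)) :
  projT1 (phi (existT _ j a)) = projT1 (phi (stU j)).
Proof.
  set (q := existT (fun j => idx (u j)) j a).
  assert (Es : phi (stU j) = stV (projT1 (phi (stU j)))).
  { apply (isStart_eq HK Hv Hnev HXv). apply Hc. apply (isStart_st HJ). }
  set (k := projT1 (phi (stU j))). fold k in Es.
  assert (Hle : ltw (stU j) q \/ stU j = q) by exact (st_le_blk HJ Hu Hneu HXu q).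
  destruct (classic (projT1 (phi q) = k)) as [E|NE]; auto. exfalso.
  assert (Hlt : ltw (stV k) (phi q)).
  { destruct Hle as [H|H]; [|rewrite <- H in NE; contradiction].
    apply phi_lt in H. rewrite <- Es. exact H. }
  set (k' := projT1 (phi q)).
  assert (Hkk : olt k k').
  { destruct (wp_lt_block Hlt) as [H|H]; auto. exfalso. apply NE. symmetry. exact H. }
  assert (Hsk' : ltw (stV k') (phi q) \/ stV k' = phi q) by exact (st_le_blk HK Hv Hnev HXv (phi q)).
  set (r := phi' (stV k')).
  assert (Sr : isStart r). { apply Hc. unfold r. rewrite Hinv2. apply (isStart_st HK). }
  assert (Er : r = stU (projT1 r)) by exact (isStart_eq HJ Hu Hneu HXu Sr).
  assert (H1 : ltw (stU j) r).
  { rewrite <- (Hinv1 (stU j)). unfold r. apply phi'_lt. rewrite Es. apply (st_lt_iff HK Hv Hnev HXv). exact Hkk. }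
  rewrite Er in H1. apply (st_lt_iff HJ Hu Hneu HXu) in H1.
  assert (H2 : ltw r q \/ r = q).
  { destruct Hsk' as [H|H].
    - left. rewrite <- (Hinv1 q). unfold r. apply phi'_lt. exact H.
    - right. unfold r. rewrite H. apply Hinv1. }
  destruct H2 as [H2|H2].
  - exact (blk_of_lt HXu H2 H1).
  - rewrite H2 in H1. exact (oirr HJ H1).
Qed.

End Sym.


Lemma sig_cast (T : Type) (P : T -> Type) (p : sigT P) (k : T) (H : projT1 p = k) :
  existT P k (eq_rect (projT1 p) P (projT2 p) k H) = p.
Proof. destruct p as [x y]; simpl in *; subst; reflexivity. Qed.

Section Fin.
Context {disp : Order.disp_t} {A : finOrderType disp}.
Local Notation word := (@word disp A).

Definition ord2 : ord := @Ord bool (fun a b => a = false /\ b = true).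

Lemma ord2_ok : is_ordinal ord2.
Proof.
  split; [|split; [|split]]; simpl.
  - intros a [H1 H2]. congruence.
  - intros a b c [H1 H2] [H3 H4]. congruence.
  - intros [] []; auto.
  - intros a. destruct a; constructor; intros [] [H1 H2]; try discriminate;
      constructor; intros [] [H3 H4]; discriminate.
Qed.

Lemma prime_nonempty (w : word) : is_word w -> prime_word w -> inhabited (idx w).
Proof.
  intros Hw [Hpr _]. apply NNPP. intros Hn.
  assert (E : weq w (wpow w ord2)).
  { exists (fun x => False_rect _ (Hn (inhabits x))). split; [|split].
    - exists (fun y => False_rect _ (Hn (inhabits (projT2 y)))). split; intros x; exfalso.
      + apply Hn; constructor; exact x.
      + apply Hn; constructor; exact (projT2 x).
    - intros x; exfalso; apply Hn; constructor; exact x.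
    - intros x; exfalso; apply Hn; constructor; exact x. }
  destruct (Hpr w ord2 Hw ord2_ok E) as [[t Ht] _].
  assert (H1 := Ht true). assert (H2 := Ht false). congruence.
Qed.

Lemma blk_weq (J K : ord) (u : J -> word) (v : K -> word) (HJ : is_ordinal J) (HK : is_ordinal K)
  (phi : idx (wprod u) -> idx (wprod v)) (phi' : idx (wprod v) -> idx (wprod u))
  (Hphi : seg (a:=wprod u) (b:=wprod v) TT TT phi)
  (Hi1 : forall x, phi' (phi x) = x) (Hi2 : forall y, phi (phi' y) = y)
  (j : J) (k : K) (H1 : forall a, projT1 (phi (existT _ j a)) = k)
  (H2 : forall b, projT1 (phi' (existT _ k b)) = j) :
  is_word (u j) -> is_word (v k) -> weq (u j) (v k).
Proof.
  intros Hu Hv.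
  set (F := fun a => eq_rect _ (fun k => idx (v k)) (projT2 (phi (existT _ j a))) k (H1 a)).
  assert (EF : forall a, existT (fun k => idx (v k)) k (F a) = phi (existT _ j a)).
  { intros a. unfold F. apply sig_cast. }
  apply (@seg_weq _ _ (u j) (v k) F Hu Hv). split; [|split; [|split]].
  - intros; exact I.
  - intros b _. set (p := phi' (existT _ k b)).
    set (a := eq_rect _ (fun j => idx (u j)) (projT2 p) j (H2 b)).
    assert (Ea : existT (fun j => idx (u j)) j a = p) by (unfold a; apply sig_cast).
    exists a. split; [exact I|].
    assert (E2 : existT (fun k => idx (v k)) k (F a) = existT _ k b).
    { rewrite EF Ea. unfold p. apply Hi2. }
    exact (Eqdep.EqdepTheory.inj_pair2 _ _ _ _ _ E2).
  - intros a a' _ _. rewrite <- (gwp_lt_same (u:=u) (oirr HJ)).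
    rewrite <- (gwp_lt_same (u:=v) (oirr HK)). rewrite !EF.
    exact (proj1 (proj2 (proj2 Hphi)) _ _ I I).
  - intros a _. change (lab (F a)) with (@lab _ _ (wprod v) (existT (fun k => idx (v k)) k (F a))).
    rewrite EF. exact (proj2 (proj2 (proj2 Hphi)) _ I).
Qed.

End Fin.

Theorem mainTheorem18 (disp : Order.disp_t) (A : finOrderType disp)
  (x : @word disp A) (Hx : is_word x) (Hxc : countable_word x)
  (J : ord) (u : J -> @word disp A) (K : ord) (v : K -> @word disp A) :
  is_ordinal J -> (forall j, is_word (u j)) -> (forall j, prime_word (u j)) ->
  dense_nonincr u -> weq x (wprod u) ->
  is_ordinal K -> (forall k, is_word (v k)) -> (forall k, prime_word (v k)) ->
  dense_nonincr v -> weq x (wprod v) ->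
  seq_eq u v.
Proof.
  intros HJ Hu Hpu Hdu Hxu HK Hv Hpv Hdv Hxv.
  assert (Hneu : forall j, inhabited (idx (u j))) by (intros j; apply prime_nonempty; auto).
  assert (Hnev : forall k, inhabited (idx (v k))) by (intros k; apply prime_nonempty; auto).
  assert (HXu := is_word_weq Hxu Hx). assert (HXv := is_word_weq Hxv Hx).
  destruct (weq_trans (weq_sym Hxu) Hxv) as [phi [[phi' [Hi1 Hi2]] [Ho Hl]]].
  assert (Hphi : seg (a:=wprod u) (b:=wprod v) TT TT phi).
  { split; [|split; [|split]].
    - intros; exact I.
    - intros y _. exists (phi' y). split; [exact I|apply Hi2].
    - intros a b _ _. apply Ho.
    - intros a _. apply Hl. }
  assert (Hphi' : seg (a:=wprod v) (b:=wprod u) TT TT phi').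
  { split; [|split; [|split]].
    - intros; exact I.
    - intros y _. exists (phi y). split; [exact I|apply Hi1].
    - intros a b _ _. rewrite (Ho (phi' a) (phi' b)) !Hi2. tauto.
    - intros a _. rewrite <- (Hl (phi' a)), Hi2. reflexivity. }
  assert (Hc : forall p, isStart p <-> isStart (phi p)).
  { apply NNPP. intros Hn. apply not_all_ex_not in Hn. destruct Hn as [p0 Hp0].
    destruct (wf_min (wo_wf HXu) (ex_intro (fun p => ~ (isStart p <-> isStart (phi p))) p0 Hp0))
      as [p [Hp Hm]].
    assert (Hm' : forall p', ltw p' p -> (isStart p' <-> isStart (phi p'))).
    { intros p' Hl'. apply NNPP. exact (Hm p' Hl'). }
    destruct (classic (isStart p)) as [Sp|Sp].
    - assert (Snp : ~ isStart (phi p)) by (intros H; apply Hp; tauto).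
      exact (Step HJ HK Hu Hv Hneu Hnev HXu HXv Hdu Hpv Hphi Hphi' Hi1 Hi2 Sp Snp Hm').
    - assert (Snp : isStart (phi p)) by (apply NNPP; intros H; apply Hp; tauto).
      apply (Step HK HJ Hv Hu Hnev Hneu HXv HXu Hdv Hpu Hphi' Hphi Hi2 Hi1 Snp).
      + rewrite Hi1. exact Sp.
      + intros q' Hq'. assert (Hl2 : ltw (phi' q') p).
        { rewrite <- (Hi1 p). apply (proj1 (proj2 (proj2 Hphi')) _ _ I I). exact Hq'. }
        rewrite (Hm' _ Hl2) Hi2. tauto. }
  assert (Hc' : forall q, isStart q <-> isStart (phi' q)).
  { intros q. rewrite (Hc (phi' q)) Hi2. tauto. }
  set (f := fun j => projT1 (phi (st Hu Hneu j))).
  set (g := fun k => projT1 (phi' (st Hv Hnev k))).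
  assert (Ef : forall j, phi (st Hu Hneu j) = st Hv Hnev (f j)).
  { intros j. apply (isStart_eq HK Hv Hnev HXv). apply Hc. apply (isStart_st HJ). }
  assert (Eg : forall k, phi' (st Hv Hnev k) = st Hu Hneu (g k)).
  { intros k. apply (isStart_eq HJ Hu Hneu HXu). apply Hc'. apply (isStart_st HK). }
  assert (gf : forall j, g (f j) = j).
  { intros j. unfold g. rewrite <- Ef, Hi1. reflexivity. }
  assert (fg : forall k, f (g k) = k).
  { intros k. unfold f. rewrite <- Eg, Hi2. reflexivity. }
  exists f. split; [split|].
  - exists g. split; auto.
  - intros a b. rewrite <- (st_lt_iff HJ Hu Hneu HXu), <- (st_lt_iff HK Hv Hnev HXv), <- !Ef.
    apply Ho.
  - intros j. apply (blk_weq HJ HK Hphi Hi1 Hi2); auto.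
    + intros a. exact (BlkU HJ HK Hu Hv Hneu Hnev HXu HXv Hphi Hphi' Hi1 Hi2 Hc a).
    + intros b. rewrite (BlkU HK HJ Hv Hu Hnev Hneu HXv HXu Hphi' Hphi Hi2 Hi1 Hc' b).
      exact (gf j).
Qed.
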